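(* Let $\mathbb{A}$ be a 2-category having the two-dimensional kernel diagram of a 1-cell $l$. Then: (1) $l$ is a co-Kleisli morphism if and only if $l$ has a left adjoint and $l$ is an effective op-faithful morphism; (2) $l$ is a Kleisli morphism if and only if $l$ has a right adjoint and $l$ is an effective op-faithful morphism.
   Context: A 2-category is a $\mathbf{Cat}$-enriched category; composition of 1-cells is juxtaposition, vertical composition of 2-cells is $\cdot$, horizontal composition is $\ast$, $\mathrm{id}_f$ is the identity 2-cell on $f$. $\mathbb{A}^{\mathrm{op}}$, $\mathbb{A}^{\mathrm{coop}}$ are obtained from $\mathbb{A}$ by reversing 1-cells, resp. both 1-cells and 2-cells. A 1-cell is an equivalence if it has a pseudo-inverse up to invertible 2-cells. Adjunctions (in $\mathbb{A}$) are given by unit and counit 2-cells satisfying the triangle identities. For a 1-cell $p:e\to b$ of a 2-category $\mathbb{B}$: an opcomma object of $p$ along itself is $b\uparrow_pb$ with $\delta^0,\delta^1:b\to b\uparrow_pb$, $\alpha:\delta^1p\Rightarrow\delta^0p$ such that for every $y$, $h\mapsto(h\delta^0,h\delta^1,\mathrm{id}_h\ast\alpha)$ is an isomorphism from $\mathbb{B}(b\uparrow_pb,y)$ onto the category of triples $(h_0,h_1:b\to y,\beta:h_1p\Rightarrow h_0p)$ with morphisms pairs $(\xi_0,\xi_1)$ with $(\xi_0\ast\mathrm{id}_p)\cdot\beta=\beta'\cdot(\xi_1\ast\mathrm{id}_p)$. A two-dimensional pushout of a span $f_0,f_1$ is $P$ with $q_0,q_1$, $q_0f_0=q_1f_1$,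 such that $k\mapsto(kq_0,kq_1)$ is an isomorphism from $\mathbb{B}(P,y)$ onto pairs $(k_0,k_1)$ with $k_0f_0=k_1f_1$ (morphisms pairs of 2-cells $(\xi_0,\xi_1)$ with $\xi_0\ast\mathrm{id}_{f_0}=\xi_1\ast\mathrm{id}_{f_1}$). $\mathbb{B}$ has the two-dimensional cokernel diagram of $p$ if it has $b\uparrow_pb$ and a two-dimensional pushout $b\uparrow_pb\uparrow_pb$ of $(\delta^0,\delta^1)$ with $D^0,D^2$, $D^2\delta^0=D^0\delta^1$; $D^1$ is the unique 1-cell with $D^1\delta^1=D^2\delta^1$, $D^1\delta^0=D^0\delta^0$, $\mathrm{id}_{D^1}\ast\alpha=(\mathrm{id}_{D^0}\ast\alpha)\cdot(\mathrm{id}_{D^2}\ast\alpha)$; $s^0$ is unique with $s^0\delta^0=s^0\delta^1=\mathrm{id}_b$, $\mathrm{id}_{s^0}\ast\alpha=\mathrm{id}_p$. $\mathrm{Desc}_p(y)$: pairs $(h:y\to b,\beta:\delta^1h\Rightarrow\delta^0h)$ with $(\mathrm{id}_{D^0}\ast\beta)\cdot(\mathrm{id}_{D^2}\ast\beta)=\mathrm{id}_{D^1}\ast\beta$, $\mathrm{id}_{s^0}\ast\beta=\mathrm{id}_h$, morphisms $\xi:h_1\Rightarrow h_0$ with $\beta_0\cdot(\mathrm{id}_{\delta^1}\ast\xi)=(\mathrm{id}_{\delta^0}\ast\xi)\cdot\beta_1$; a lax descent object is $L$, $d:L\to b$, $\Psi:\delta^1d\Rightarrow\delta^0d$ with $g\mapsto(dg,\Psi\ast\mathrm{id}_g)$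 an isomorphism $\mathbb{B}(y,L)\cong\mathrm{Desc}_p(y)$ for all $y$; $p^H$ is unique with $dp^H=p$, $\Psi\ast\mathrm{id}_{p^H}=\alpha$. $p$ is effective faithful in $\mathbb{B}$ if $\mathbb{B}$ has the two-dimensional cokernel diagram of $p$, a lax descent object of it, and $p^H$ is an equivalence. The codensity monad of $p$ is $(b,t,m,\eta)$ from a right Kan extension $(t,\gamma)$ of $p$ along $p$ (i.e. $\gamma:tp\Rightarrow p$ with $\beta\mapsto\gamma\cdot(\beta\ast\mathrm{id}_p)$ bijective from 2-cells $k\Rightarrow t$ to 2-cells $kp\Rightarrow p$), $m$ unique with $\gamma\cdot(m\ast\mathrm{id}_p)=\gamma\cdot(\mathrm{id}_t\ast\gamma)$, $\eta$ unique with $\gamma\cdot(\eta\ast\mathrm{id}_p)=\mathrm{id}_p$. An Eilenberg–Moore object is $b^{\mathsf{T}}$ with $u$, $\mu:tu\Rightarrow u$ such that $g\mapsto(ug,\mu\ast\mathrm{id}_g)$ is an isomorphism onto the category of pairs $(h,\beta:th\Rightarrow h)$ with $\beta\cdot(\mathrm{id}_t\ast\beta)=\beta\cdot(m\ast\mathrm{id}_h)$, $\beta\cdot(\eta\ast\mathrm{id}_h)=\mathrm{id}_h$ (morphisms $\xi$ with $\xi\cdot\beta_1=\beta_0\cdot(\mathrm{id}_t\ast\xi)$). $p$ is monadic in $\mathbb{B}$ if it has a codensity monad with an Eilenberg–Moore object and the unique $p^{\mathsf{T}}$ with $up^{\mathsf{T}}=p$, $\mu\ast\mathrm{id}_{p^{\mathsf{T}}}=\gamma$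 is an equivalence. Duals in $\mathbb{A}$: the two-dimensional kernel diagram of $l$ is its two-dimensional cokernel diagram in $\mathbb{A}^{\mathrm{op}}$; $l$ is effective op-faithful if it is effective faithful in $\mathbb{A}^{\mathrm{op}}$; $l$ is a Kleisli morphism if it is monadic in $\mathbb{A}^{\mathrm{op}}$, and a co-Kleisli morphism if it is monadic in $\mathbb{A}^{\mathrm{coop}}$. *)

(* Defs.v *)
Record TwoCatData : Type := MkTwoCatData {
  ob : Type;
  hom : ob -> ob -> Type;
  idm : forall a : ob, hom a a;
  comp : forall a b c : ob, hom b c -> hom a b -> hom a c;
  cell : forall a b : ob, hom a b -> hom a b -> Type;
  vid : forall (a b : ob) (f : hom a b), cell a b f f;
  vcomp : forall (a b : ob) (f g h : hom a b),
      cell a b g h -> cell a b f g -> cell a b f h;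
  hcomp : forall (a b c : ob) (f f' : hom b c) (g g' : hom a b),
      cell b c f f' -> cell a b g g' ->
      cell a c (comp a b c f g) (comp a b c f' g')
}.

Arguments hom t _ _ : rename.
Arguments idm {t} a : rename.
Arguments comp {t a b c} g f : rename.
Arguments cell {t a b} f g : rename.
Arguments vid {t a b} f : rename.
Arguments vcomp {t a b f g h} _ _ : rename.
Arguments hcomp {t a b c f f' g g'} _ _ : rename.

(* g ⊚ f : first f, then g (juxtaposition gf of the paper) *)
Notation "g ⊚ f" := (comp g f) (at level 40, left associativity).

Definition cast {C : TwoCatData} {a b : ob C} {f f' g g' : hom C a b}
  (e1 : f = f') (e2 : g = g') (x : cell f g) : cell f' g' :=
  match e1 in _ = f1 return cell f1 g' with
  | eq_refl => match e2 in _ = g1 return cell f g1 with eq_refl => x end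
  end.

Record TwoCatAxioms (C : TwoCatData) : Prop := {
  assoc : forall (a b c d : ob C) (h : hom C c d) (g : hom C b c) (f : hom C a b),
      (h ⊚ g) ⊚ f = h ⊚ (g ⊚ f);
  idl : forall (a b : ob C) (f : hom C a b), idm b ⊚ f = f;
  idr : forall (a b : ob C) (f : hom C a b), f ⊚ idm a = f;
  vassoc : forall (a b : ob C) (f g h k : hom C a b)
      (γ : cell h k) (β : cell g h) (α : cell f g),
      vcomp (vcomp γ β) α = vcomp γ (vcomp β α);
  vidl : forall (a b : ob C) (f g : hom C a b) (α : cell f g), vcomp (vid g) α = α;
  vidr : forall (a b : ob C) (f g : hom C a b) (α : cell f g), vcomp α (vid f) = α;
  hvid : forall (a b c : ob C) (f : hom C b c) (g : hom C a b),
      hcomp (vid f) (vid g) = vid (f ⊚ g);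
  interchange : forall (a b c : ob C) (f f' f'' : hom C b c) (g g' g'' : hom C a b)
      (β : cell f f') (β' : cell f' f'') (α : cell g g') (α' : cell g' g''),
      hcomp (vcomp β' β) (vcomp α' α) = vcomp (hcomp β' α') (hcomp β α);
  hassoc : forall (a b c d : ob C) (h h' : hom C c d) (g g' : hom C b c)
      (f f' : hom C a b) (γ : cell h h') (β : cell g g') (α : cell f f'),
      cast (assoc a b c d h g f) (assoc a b c d h' g' f') (hcomp (hcomp γ β) α)
      = hcomp γ (hcomp β α);
  hidl : forall (a b : ob C) (f f' : hom C a b) (α : cell f f'),
      cast (idl a b f) (idl a b f') (hcomp (vid (idm b)) α) = α;
  hidr : forall (a b : ob C) (f f' : hom C a b) (α : cell f f'),
      cast (idr a b f) (idr a b f') (hcomp α (vid (idm a))) = α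
}.

Record TwoCat : Type := MkTwoCat {
  tc_data :> TwoCatData;
  tc_ax : TwoCatAxioms tc_data
}.

Definition opData (C : TwoCatData) : TwoCatData :=
  {| ob := ob C;
     hom := fun a b => hom C b a;
     idm := fun a => idm a;
     comp := fun a b c (g : hom C c b) (f : hom C b a) => @comp C c b a f g;
     cell := fun a b (f g : hom C b a) => @cell C b a f g;
     vid := fun a b f => @vid C b a f;
     vcomp := fun a b f g h β α => @vcomp C b a f g h β α;
     hcomp := fun a b c f f' g g' β α => @hcomp C c b a g g' f f' α β |}.

Definition coopData (C : TwoCatData) : TwoCatData :=
  {| ob := ob C;
     hom := fun a b => hom C b a;
     idm := fun a => idm a;
     comp := fun a b c (g : hom C c b) (f : hom C b a) => @comp C c b a f g;
     cell := fun a b (f g : hom C b a) => @cell C b a g f;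
     vid := fun a b f => @vid C b a f;
     vcomp := fun a b f g h β α => @vcomp C b a h g f α β;
     hcomp := fun a b c f f' g g' β α => @hcomp C c b a g' g f' f α β |}.

Lemma cast_sym (C : TwoCatData) (a b : ob C) (f f' g g' : hom C a b)
  (e1 : f = f') (e2 : g = g') (x : cell f g) (y : cell f' g') :
  cast e1 e2 x = y -> x = cast (eq_sym e1) (eq_sym e2) y.
Proof. destruct e1, e2; simpl; auto. Qed.

Lemma cast_coop (C : TwoCatData) (a b : ob C) (f f' g g' : hom C b a)
  (e1 : f = f') (e2 : g = g') (x : @cell C b a g f) :
  @cast (coopData C) a b f f' g g' e1 e2 x = @cast C b a g g' f f' e2 e1 x.
Proof. destruct e1, e2; reflexivity. Qed.

Definition opAx (C : TwoCatData) (H : TwoCatAxioms C) : TwoCatAxioms (opData C).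
Proof.
  unshelve eapply (Build_TwoCatAxioms (opData C)
    (fun a b c d h g f => eq_sym (assoc C H d c b a f g h))
    (fun a b f => idr C H b a f) (fun a b f => idl C H b a f)); simpl; intros.
  - apply (vassoc C H).
  - apply (vidl C H).
  - apply (vidr C H).
  - apply (hvid C H).
  - apply (interchange C H).
  - symmetry. apply (cast_sym C). exact (hassoc C H _ _ _ _ _ _ _ _ _ _ α β γ).
  - exact (hidr C H _ _ _ _ α).
  - exact (hidl C H _ _ _ _ α).
Defined.

Definition coopAx (C : TwoCatData) (H : TwoCatAxioms C) : TwoCatAxioms (coopData C).
Proof.
  unshelve eapply (Build_TwoCatAxioms (coopData C)
    (fun a b c d h g f => eq_sym (assoc C H d c b a f g h))
    (fun a b f => idr C H b a f) (fun a b f => idl C H b a f)); simpl; intros.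
  - symmetry; apply (vassoc C H).
  - apply (vidr C H).
  - apply (vidl C H).
  - apply (hvid C H).
  - apply (interchange C H).
  - rewrite cast_coop. symmetry. apply (cast_sym C).
    exact (hassoc C H _ _ _ _ _ _ _ _ _ _ α β γ).
  - rewrite cast_coop. exact (hidr C H _ _ _ _ α).
  - rewrite cast_coop. exact (hidl C H _ _ _ _ α).
Defined.

Definition op (A : TwoCat) : TwoCat := @MkTwoCat (opData A) (opAx A (tc_ax A)).
Definition coop (A : TwoCat) : TwoCat := @MkTwoCat (coopData A) (coopAx A (tc_ax A)).

Section Notions.
Context {B : TwoCat}.

Definition asc {a b c d : ob B} (h : hom B c d) (g : hom B b c) (f : hom B a b) :
  (h ⊚ g) ⊚ f = h ⊚ (g ⊚ f) := assoc _ (tc_ax B) a b c d h g f.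
Definition lid {a b : ob B} (f : hom B a b) : idm b ⊚ f = f := idl _ (tc_ax B) a b f.
Definition rid {a b : ob B} (f : hom B a b) : f ⊚ idm a = f := idr _ (tc_ax B) a b f.

Definition wl {a b c : ob B} (h : hom B b c) {f g : hom B a b} (x : cell f g) :
  cell (h ⊚ f) (h ⊚ g) := hcomp (vid h) x.
Definition wr {a b c : ob B} {f g : hom B b c} (x : cell f g) (h : hom B a b) :
  cell (f ⊚ h) (g ⊚ h) := hcomp x (vid h).

Definition reassoc1 {a b c d : ob B} {x : hom B c d} {y : hom B b c} {w : hom B b d}
  (E : x ⊚ y = w) (z : hom B a b) : x ⊚ (y ⊚ z) = w ⊚ z :=
  eq_trans (eq_sym (asc x y z)) (f_equal (fun u => u ⊚ z) E).
Definition reassoc2 {a b c d : ob B} {x x' : hom B c d} {y y' : hom B b c}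
  (E : x ⊚ y = x' ⊚ y') (z : hom B a b) : x ⊚ (y ⊚ z) = x' ⊚ (y' ⊚ z) :=
  eq_trans (reassoc1 E z) (asc x' y' z).

Definition iso2 {a b : ob B} (f g : hom B a b) : Prop :=
  exists (θ : cell f g) (θ' : cell g f), vcomp θ' θ = vid f /\ vcomp θ θ' = vid g.

Definition is_equivalence {a b : ob B} (f : hom B a b) : Prop :=
  exists g : hom B b a, iso2 (g ⊚ f) (idm a) /\ iso2 (f ⊚ g) (idm b).

(* is_adjunction f g : f is left adjoint to g (unit η, counit ε, triangle identities) *)
Definition is_adjunction {a b : ob B} (f : hom B b a) (g : hom B a b) : Prop :=
  exists (η : cell (idm b) (g ⊚ f)) (ε : cell (f ⊚ g) (idm a)),
    cast (rid f) (lid f) (vcomp (wr ε f) (cast eq_refl (eq_sym (asc f g f)) (wl f η)))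
      = vid f /\
    cast (lid g) (rid g) (vcomp (wl g ε) (cast eq_refl (asc g f g) (wr η g)))
      = vid g.

Definition has_left_adjoint {a b : ob B} (l : hom B a b) : Prop :=
  exists f : hom B b a, is_adjunction f l.
Definition has_right_adjoint {a b : ob B} (l : hom B a b) : Prop :=
  exists r : hom B b a, is_adjunction l r.

Section Opcomma.
Context {e b : ob B} (p : hom B e b).

Record OTriple (y : ob B) : Type := MkOTriple {
  t0 : hom B b y; t1 : hom B b y; tb : cell (t1 ⊚ p) (t0 ⊚ p) }.
Arguments t0 {y}. Arguments t1 {y}. Arguments tb {y}.

Definition OTripleMor {y : ob B} (t t' : OTriple y)
  (ξ0 : cell (t0 t) (t0 t')) (ξ1 : cell (t1 t) (t1 t')) : Prop :=
  vcomp (wr ξ0 p) (tb t) = vcomp (tb t') (wr ξ1 p).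

Definition otriple_of {P y : ob B} (d0 d1 : hom B b P) (α : cell (d1 ⊚ p) (d0 ⊚ p))
  (h : hom B P y) : OTriple y :=
  MkOTriple y (h ⊚ d0) (h ⊚ d1) (cast (eq_sym (asc h d1 p)) (eq_sym (asc h d0 p)) (wl h α)).

Definition is_opcomma (P : ob B) (d0 d1 : hom B b P) (α : cell (d1 ⊚ p) (d0 ⊚ p)) : Prop :=
  forall y : ob B,
    (forall t : OTriple y, exists! h : hom B P y, otriple_of d0 d1 α h = t) /\
    (forall (h h' : hom B P y) (ξ0 : cell (h ⊚ d0) (h' ⊚ d0)) (ξ1 : cell (h ⊚ d1) (h' ⊚ d1)),
        OTripleMor (otriple_of d0 d1 α h) (otriple_of d0 d1 α h') ξ0 ξ1 ->
        exists! ξ : cell h h', wr ξ d0 = ξ0 /\ wr ξ d1 = ξ1).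
End Opcomma.

Section Pushout.
Context {s x0 x1 : ob B} (f0 : hom B s x0) (f1 : hom B s x1).

Record PPair (y : ob B) : Type := MkPPair {
  k0 : hom B x0 y; k1 : hom B x1 y; ke : k0 ⊚ f0 = k1 ⊚ f1 }.
Arguments k0 {y}. Arguments k1 {y}. Arguments ke {y}.

Definition PPairMor {y : ob B} (t t' : PPair y)
  (ξ0 : cell (k0 t) (k0 t')) (ξ1 : cell (k1 t) (k1 t')) : Prop :=
  cast (ke t) (ke t') (wr ξ0 f0) = wr ξ1 f1.

Definition ppair_of {Q y : ob B} (q0 : hom B x0 Q) (q1 : hom B x1 Q)
  (E : q0 ⊚ f0 = q1 ⊚ f1) (k : hom B Q y) : PPair y :=
  MkPPair y (k ⊚ q0) (k ⊚ q1)
    (eq_trans (asc k q0 f0) (eq_trans (f_equal (comp k) E) (eq_sym (asc k q1 f1)))).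

Definition is_pushout (Q : ob B) (q0 : hom B x0 Q) (q1 : hom B x1 Q)
  (E : q0 ⊚ f0 = q1 ⊚ f1) : Prop :=
  forall y : ob B,
    (forall t : PPair y, exists! k : hom B Q y, k ⊚ q0 = k0 t /\ k ⊚ q1 = k1 t) /\
    (forall (k k' : hom B Q y) (ξ0 : cell (k ⊚ q0) (k' ⊚ q0)) (ξ1 : cell (k ⊚ q1) (k' ⊚ q1)),
        PPairMor (ppair_of q0 q1 E k) (ppair_of q0 q1 E k') ξ0 ξ1 ->
        exists! ξ : cell k k', wr ξ q0 = ξ0 /\ wr ξ q1 = ξ1).
End Pushout.

(* P = b↑_p b (with δ^0 = ck_d0, δ^1 = ck_d1, α = ck_α),
   Q = b↑_p b↑_p b the pushout of (δ^0, δ^1) with D^0, D^2, D^2 δ^0 = D^0 δ^1;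
   D^1 and s^0 are the (unique, by the opcomma property) 1-cells described
   in the paper, recorded together with their defining equations. *)
Record CokernelDiagram {e b : ob B} (p : hom B e b) : Type := MkCokernelDiagram {
  ck_P : ob B;
  ck_d0 : hom B b ck_P;
  ck_d1 : hom B b ck_P;
  ck_α : cell (ck_d1 ⊚ p) (ck_d0 ⊚ p);
  ck_opcomma : is_opcomma p ck_P ck_d0 ck_d1 ck_α;
  ck_Q : ob B;
  ck_D0 : hom B ck_P ck_Q;
  ck_D2 : hom B ck_P ck_Q;
  ck_DE : ck_D2 ⊚ ck_d0 = ck_D0 ⊚ ck_d1;
  ck_pushout : is_pushout ck_d0 ck_d1 ck_Q ck_D2 ck_D0 ck_DE;
  ck_D1 : hom B ck_P ck_Q;
  ck_D1e1 : ck_D1 ⊚ ck_d1 = ck_D2 ⊚ ck_d1;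
  ck_D1e0 : ck_D1 ⊚ ck_d0 = ck_D0 ⊚ ck_d0;
  ck_D1α : cast (reassoc2 ck_D1e1 p) (reassoc2 ck_D1e0 p) (wl ck_D1 ck_α)
           = vcomp (wl ck_D0 ck_α) (cast eq_refl (reassoc2 ck_DE p) (wl ck_D2 ck_α));
  ck_s0 : hom B ck_P b;
  ck_s0e0 : ck_s0 ⊚ ck_d0 = idm b;
  ck_s0e1 : ck_s0 ⊚ ck_d1 = idm b;
  ck_s0α : cast (eq_trans (reassoc1 ck_s0e1 p) (lid p))
                (eq_trans (reassoc1 ck_s0e0 p) (lid p)) (wl ck_s0 ck_α) = vid p
}.

Arguments ck_P {e b p} _.
Arguments ck_d0 {e b p} _.
Arguments ck_d1 {e b p} _.
Arguments ck_α {e b p} _.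
Arguments ck_opcomma {e b p} _.
Arguments ck_Q {e b p} _.
Arguments ck_D0 {e b p} _.
Arguments ck_D2 {e b p} _.
Arguments ck_DE {e b p} _.
Arguments ck_pushout {e b p} _.
Arguments ck_D1 {e b p} _.
Arguments ck_D1e1 {e b p} _.
Arguments ck_D1e0 {e b p} _.
Arguments ck_D1α {e b p} _.
Arguments ck_s0 {e b p} _.
Arguments ck_s0e0 {e b p} _.
Arguments ck_s0e1 {e b p} _.
Arguments ck_s0α {e b p} _.

Definition has_cokernel_diagram {e b : ob B} (p : hom B e b) : Prop :=
  inhabited (CokernelDiagram p).

Section Descent.
Context {e b : ob B} {p : hom B e b} (C : CokernelDiagram p).

Record DObj (y : ob B) : Type := MkDObj {
  dh : hom B y b; dβ : cell (ck_d1 C ⊚ dh) (ck_d0 C ⊚ dh) }.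
Arguments dh {y}. Arguments dβ {y}.

Definition is_desc {y : ob B} (x : DObj y) : Prop :=
  vcomp (wl (ck_D0 C) (dβ x)) (cast eq_refl (reassoc2 (ck_DE C) (dh x)) (wl (ck_D2 C) (dβ x)))
    = cast (reassoc2 (ck_D1e1 C) (dh x)) (reassoc2 (ck_D1e0 C) (dh x)) (wl (ck_D1 C) (dβ x))
  /\
  cast (eq_trans (reassoc1 (ck_s0e1 C) (dh x)) (lid (dh x)))
       (eq_trans (reassoc1 (ck_s0e0 C) (dh x)) (lid (dh x))) (wl (ck_s0 C) (dβ x))
    = vid (dh x).

Definition DMor {y : ob B} (x x' : DObj y) (ξ : cell (dh x) (dh x')) : Prop :=
  vcomp (dβ x') (wl (ck_d1 C) ξ) = vcomp (wl (ck_d0 C) ξ) (dβ x).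

Definition dobj_of {L y : ob B} (d : hom B L b) (Ψ : cell (ck_d1 C ⊚ d) (ck_d0 C ⊚ d))
  (g : hom B y L) : DObj y :=
  MkDObj y (d ⊚ g) (cast (asc (ck_d1 C) d g) (asc (ck_d0 C) d g) (wr Ψ g)).

Definition is_lax_descent (L : ob B) (d : hom B L b)
  (Ψ : cell (ck_d1 C ⊚ d) (ck_d0 C ⊚ d)) : Prop :=
  forall y : ob B,
    (forall g : hom B y L, is_desc (dobj_of d Ψ g)) /\
    (forall x : DObj y, is_desc x -> exists! g : hom B y L, dobj_of d Ψ g = x) /\
    (forall (g g' : hom B y L) (ξ : cell (d ⊚ g) (d ⊚ g')),
        DMor (dobj_of d Ψ g) (dobj_of d Ψ g') ξ ->
        exists! θ : cell g g', wl d θ = ξ).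
End Descent.

Definition is_effective_faithful {e b : ob B} (p : hom B e b) : Prop :=
  exists (C : CokernelDiagram p) (L : ob B) (d : hom B L b)
         (Ψ : cell (ck_d1 C ⊚ d) (ck_d0 C ⊚ d)),
    is_lax_descent C L d Ψ /\
    exists (pH : hom B e L) (E : d ⊚ pH = p),
      cast (eq_trans (asc (ck_d1 C) d pH) (f_equal (comp (ck_d1 C)) E))
           (eq_trans (asc (ck_d0 C) d pH) (f_equal (comp (ck_d0 C)) E)) (wr Ψ pH)
        = ck_α C
      /\ is_equivalence pH.

Record Codensity {e b : ob B} (p : hom B e b) : Type := MkCodensity {
  cd_t : hom B b b;
  cd_γ : cell (cd_t ⊚ p) p;
  cd_ran : forall (k : hom B b b) (δ : cell (k ⊚ p) p),
      exists! β : cell k cd_t, vcomp cd_γ (wr β p) = δ;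
  cd_m : cell (cd_t ⊚ cd_t) cd_t;
  cd_mE : cast (asc cd_t cd_t p) eq_refl (vcomp cd_γ (wr cd_m p))
          = vcomp cd_γ (wl cd_t cd_γ);
  cd_η : cell (idm b) cd_t;
  cd_ηE : cast (lid p) eq_refl (vcomp cd_γ (wr cd_η p)) = vid p
}.

Arguments cd_t {e b p} _.
Arguments cd_γ {e b p} _.
Arguments cd_ran {e b p} _.
Arguments cd_m {e b p} _.
Arguments cd_mE {e b p} _.
Arguments cd_η {e b p} _.
Arguments cd_ηE {e b p} _.

Section EM.
Context {e b : ob B} {p : hom B e b} (T : Codensity p).

Record AObj (y : ob B) : Type := MkAObj {
  ah : hom B y b; aβ : cell (cd_t T ⊚ ah) ah }.
Arguments ah {y}. Arguments aβ {y}.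

Definition is_alg {y : ob B} (x : AObj y) : Prop :=
  cast (asc (cd_t T) (cd_t T) (ah x)) eq_refl (vcomp (aβ x) (wr (cd_m T) (ah x)))
    = vcomp (aβ x) (wl (cd_t T) (aβ x))
  /\ cast (lid (ah x)) eq_refl (vcomp (aβ x) (wr (cd_η T) (ah x))) = vid (ah x).

Definition AMor {y : ob B} (x x' : AObj y) (ξ : cell (ah x) (ah x')) : Prop :=
  vcomp ξ (aβ x) = vcomp (aβ x') (wl (cd_t T) ξ).

Definition aobj_of {bT y : ob B} (u : hom B bT b) (μ : cell (cd_t T ⊚ u) u)
  (g : hom B y bT) : AObj y :=
  MkAObj y (u ⊚ g) (cast (asc (cd_t T) u g) eq_refl (wr μ g)).

Definition is_EM (bT : ob B) (u : hom B bT b) (μ : cell (cd_t T ⊚ u) u) : Prop :=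
  forall y : ob B,
    (forall g : hom B y bT, is_alg (aobj_of u μ g)) /\
    (forall x : AObj y, is_alg x -> exists! g : hom B y bT, aobj_of u μ g = x) /\
    (forall (g g' : hom B y bT) (ξ : cell (u ⊚ g) (u ⊚ g')),
        AMor (aobj_of u μ g) (aobj_of u μ g') ξ ->
        exists! θ : cell g g', wl u θ = ξ).
End EM.

Definition is_monadic {e b : ob B} (p : hom B e b) : Prop :=
  exists (T : Codensity p) (bT : ob B) (u : hom B bT b) (μ : cell (cd_t T ⊚ u) u),
    is_EM T bT u μ /\
    exists (pT : hom B e bT) (E : u ⊚ pT = p),
      cast (eq_trans (asc (cd_t T) u pT) (f_equal (comp (cd_t T)) E)) E (wr μ pT)
        = cd_γ T
      /\ is_equivalence pT.

End Notions.

Definition has_kernel_diagram (A : TwoCat) {a b : ob A} (l : hom A a b) : Prop :=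
  @has_cokernel_diagram (op A) b a l.
Definition is_effective_opfaithful (A : TwoCat) {a b : ob A} (l : hom A a b) : Prop :=
  @is_effective_faithful (op A) b a l.
Definition is_kleisli (A : TwoCat) {a b : ob A} (l : hom A a b) : Prop :=
  @is_monadic (op A) b a l.
Definition is_cokleisli (A : TwoCat) {a b : ob A} (l : hom A a b) : Prop :=
  @is_monadic (coop A) b a l.

(* Main.v *)
Require Import Defs.
From Stdlib Require Import Eqdep ClassicalEpsilon ProofIrrelevance.

Set Implicit Arguments.

Section Packed.
Context {B : TwoCat}.

Definition Cell (a b : ob B) : Type :=
  { fg : hom B a b * hom B a b & cell (fst fg) (snd fg) }.
Definition src {a b} (X : Cell a b) : hom B a b := fst (projT1 X).
Definition tgt {a b} (X : Cell a b) : hom B a b := snd (projT1 X).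
Definition cl {a b} (X : Cell a b) : cell (src X) (tgt X) := projT2 X.
Definition pk {a b} {f g : hom B a b} (x : cell f g) : Cell a b :=
  existT (fun fg => cell (fst fg) (snd fg)) (f, g) x.

Lemma pk_inj {a b} {f g : hom B a b} (x y : cell f g) : pk x = pk y -> x = y.
Proof. intro H. exact (inj_pair2 _ (fun fg => cell (fst fg) (snd fg)) _ _ _ H). Qed.

Lemma pk_cast {a b} {f f' g g' : hom B a b} (e1 : f = f') (e2 : g = g') (x : cell f g) :
  pk (cast e1 e2 x) = pk x.
Proof. destruct e1, e2; reflexivity. Qed.

Lemma pk_cl {a b} (X : Cell a b) : pk (cl X) = X.
Proof. destruct X as [[f g] x]; reflexivity. Qed.

Lemma cast_pk {a b} {f f' g g' : hom B a b} (e1 : f = f') (e2 : g = g') (x : cell f g) (y : cell f' g') :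
  pk x = pk y -> cast e1 e2 x = y.
Proof. intro H. apply pk_inj. rewrite pk_cast. exact H. Qed.

Definition pid {a b} (f : hom B a b) : Cell a b := pk (vid f).

Definition pv {a b} (X Y : Cell a b) : Cell a b :=
  match excluded_middle_informative (src X = tgt Y) with
  | left e => pk (vcomp (cl X) (cast eq_refl (eq_sym e) (cl Y)))
  | right _ => X
  end.

Definition pwl {a b c} (h : hom B b c) (X : Cell a b) : Cell a c := pk (wl h (cl X)).
Definition pwr {a b c} (X : Cell b c) (h : hom B a b) : Cell a c := pk (wr (cl X) h).

Lemma uip_refl {T} {x : T} (e : x = x) : e = eq_refl.
Proof. apply UIP. Qed.

Lemma pv_pk {a b} {f g h : hom B a b} (x : cell g h) (y : cell f g) :
  pv (pk x) (pk y) = pk (vcomp x y).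
Proof.
  unfold pv. destruct (excluded_middle_informative _) as [e|n].
  - simpl in e. rewrite (uip_refl e). reflexivity.
  - exfalso. apply n. reflexivity.
Qed.

Lemma pv_pk' {a b} {f g g' h : hom B a b} (x : cell g' h) (y : cell f g) (e : g = g') :
  pv (pk x) (pk y) = pk (vcomp x (cast eq_refl e y)).
Proof. destruct e. apply pv_pk. Qed.

Lemma pwl_pk {a b c} (k : hom B b c) {f g : hom B a b} (x : cell f g) : pwl k (pk x) = pk (wl k x).
Proof. reflexivity. Qed.
Lemma pwr_pk {a b c} {f g : hom B b c} (x : cell f g) (k : hom B a b) : pwr (pk x) k = pk (wr x k).
Proof. reflexivity. Qed.

Lemma src_pk {a b} {f g : hom B a b} (x : cell f g) : src (pk x) = f. Proof. reflexivity. Qed.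
Lemma tgt_pk {a b} {f g : hom B a b} (x : cell f g) : tgt (pk x) = g. Proof. reflexivity. Qed.
Lemma src_pv {a b} (X Y : Cell a b) : src X = tgt Y -> src (pv X Y) = src Y.
Proof. intro e. unfold pv. destruct (excluded_middle_informative _); [reflexivity|contradiction]. Qed.
Lemma tgt_pv {a b} (X Y : Cell a b) : tgt (pv X Y) = tgt X.
Proof. unfold pv. destruct (excluded_middle_informative _); reflexivity. Qed.
Lemma src_pwl {a b c} (h : hom B b c) (X : Cell a b) : src (pwl h X) = h ⊚ src X. Proof. reflexivity. Qed.
Lemma tgt_pwl {a b c} (h : hom B b c) (X : Cell a b) : tgt (pwl h X) = h ⊚ tgt X. Proof. reflexivity. Qed.
Lemma src_pwr {a b c} (X : Cell b c) (h : hom B a b) : src (pwr X h) = src X ⊚ h. Proof. reflexivity. Qed.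
Lemma tgt_pwr {a b c} (X : Cell b c) (h : hom B a b) : tgt (pwr X h) = tgt X ⊚ h. Proof. reflexivity. Qed.
Lemma src_pid {a b} (f : hom B a b) : src (pid f) = f. Proof. reflexivity. Qed.
Lemma tgt_pid {a b} (f : hom B a b) : tgt (pid f) = f. Proof. reflexivity. Qed.

Ltac dX X := let f := fresh "f" in let g := fresh "g" in let x := fresh "x" in
  destruct X as [[f g] x]; simpl in *.

Definition AX := tc_ax B.

Lemma pv_assoc {a b} (X Y Z : Cell a b) : src X = tgt Y -> src Y = tgt Z ->
  pv (pv X Y) Z = pv X (pv Y Z).
Proof.
  dX X; dX Y; dX Z. unfold src, tgt; simpl. intros e1 e2. subst.
  change (existT _ (?f, ?g) ?x) with (pk x). rewrite !pv_pk. f_equal. apply (vassoc _ AX).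
Qed.

Lemma pv_idl {a b} (X : Cell a b) : pv (pid (tgt X)) X = X.
Proof. dX X. unfold pid, tgt; simpl. change (existT _ (?f, ?g) ?x) with (pk x). rewrite pv_pk.
  f_equal. apply (vidl _ AX). Qed.
Lemma pv_idr {a b} (X : Cell a b) : pv X (pid (src X)) = X.
Proof. dX X. unfold pid, src; simpl. change (existT _ (?f, ?g) ?x) with (pk x). rewrite pv_pk.
  f_equal. apply (vidr _ AX). Qed.
Lemma pv_idl' {a b} (X : Cell a b) f : f = tgt X -> pv (pid f) X = X.
Proof. intros ->. apply pv_idl. Qed.
Lemma pv_idr' {a b} (X : Cell a b) f : f = src X -> pv X (pid f) = X.
Proof. intros ->. apply pv_idr. Qed.

Lemma pwl_pv {a b c} (h : hom B b c) (X Y : Cell a b) : src X = tgt Y ->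
  pwl h (pv X Y) = pv (pwl h X) (pwl h Y).
Proof.
  dX X; dX Y. unfold src, tgt; simpl. intros e. subst.
  change (existT _ (?f, ?g) ?x) with (pk x). rewrite !pv_pk, !pwl_pk, pv_pk. f_equal.
  unfold wl. rewrite <- (interchange _ AX). rewrite (vidl _ AX). reflexivity.
Qed.
Lemma pwr_pv {a b c} (X Y : Cell b c) (h : hom B a b) : src X = tgt Y ->
  pwr (pv X Y) h = pv (pwr X h) (pwr Y h).
Proof.
  dX X; dX Y. unfold src, tgt; simpl. intros e. subst.
  change (existT _ (?f, ?g) ?x) with (pk x). rewrite !pv_pk, !pwr_pk, pv_pk. f_equal.
  unfold wr. rewrite <- (interchange _ AX). rewrite (vidl _ AX). reflexivity.
Qed.
Lemma pwl_id {a b c} (h : hom B b c) (f : hom B a b) : pwl h (pid f) = pid (h ⊚ f).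
Proof. unfold pid. rewrite pwl_pk. f_equal. apply (hvid _ AX). Qed.
Lemma pwr_id {a b c} (f : hom B b c) (h : hom B a b) : pwr (pid f) h = pid (f ⊚ h).
Proof. unfold pid. rewrite pwr_pk. f_equal. apply (hvid _ AX). Qed.

Lemma pwl_comp {a b c d} (h : hom B c d) (g : hom B b c) (X : Cell a b) :
  pwl (h ⊚ g) X = pwl h (pwl g X).
Proof.
  dX X. change (existT _ (?f, ?g) ?x) with (pk x). rewrite !pwl_pk.
  unfold wl. rewrite <- (hvid _ AX).
  rewrite <- (hassoc _ AX _ _ _ _ _ _ _ _ _ _ (vid h) (vid g) x). rewrite pk_cast. reflexivity.
Qed.
Lemma pwr_comp {a b c d} (X : Cell c d) (g : hom B b c) (f : hom B a b) :
  pwr X (g ⊚ f) = pwr (pwr X g) f.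
Proof.
  dX X. change (existT _ (?f, ?g) ?x) with (pk x). rewrite !pwr_pk.
  unfold wr. rewrite <- (hvid _ AX).
  rewrite <- (hassoc _ AX _ _ _ _ _ _ _ _ _ _ x (vid g) (vid f)). rewrite pk_cast. reflexivity.
Qed.
Lemma pwl_pwr {a b c d} (h : hom B c d) (X : Cell b c) (f : hom B a b) :
  pwl h (pwr X f) = pwr (pwl h X) f.
Proof.
  dX X. change (existT _ (?f, ?g) ?x) with (pk x). repeat rewrite ?pwl_pk, ?pwr_pk.
  unfold wl, wr.
  rewrite <- (hassoc _ AX _ _ _ _ _ _ _ _ _ _ (vid h) x (vid f)). rewrite pk_cast. reflexivity.
Qed.
Lemma pwl_idm {a b} (X : Cell a b) : pwl (idm b) X = X.
Proof.
  dX X. change (existT _ (?f, ?g) ?x) with (pk x). rewrite !pwl_pk.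
  unfold wl. rewrite <- (pk_cast (idl _ AX _ _ f) (idl _ AX _ _ g)). f_equal. apply (hidl _ AX).
Qed.
Lemma pwr_idm {a b} (X : Cell a b) : pwr X (idm a) = X.
Proof.
  dX X. change (existT _ (?f, ?g) ?x) with (pk x). rewrite !pwr_pk.
  unfold wr. rewrite <- (pk_cast (idr _ AX _ _ f) (idr _ AX _ _ g)). f_equal. apply (hidr _ AX).
Qed.

Lemma pnat {a b c} (X : Cell b c) (Y : Cell a b) :
  pv (pwr X (tgt Y)) (pwl (src X) Y) = pv (pwl (tgt X) Y) (pwr X (src Y)).
Proof.
  dX X; dX Y. unfold src, tgt; simpl.
  change (existT _ (?f, ?g) ?x) with (pk x). rewrite !pwl_pk, !pwr_pk, !pv_pk.
  unfold wl, wr. rewrite <- !(interchange _ AX). rewrite !(vidl _ AX), !(vidr _ AX). reflexivity.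
Qed.

Lemma pnat' {a b c} (X : Cell b c) (Y : Cell a b) f g f' g' :
  f = src X -> g = tgt X -> f' = src Y -> g' = tgt Y ->
  pv (pwr X g') (pwl f Y) = pv (pwl g Y) (pwr X f').
Proof. intros -> -> -> ->. apply pnat. Qed.

End Packed.

Section PkLemmas.
Context {B : TwoCat}.
Lemma pk_vcomp {a b} {f g h : hom B a b} (x : cell g h) (y : cell f g) :
  pk (vcomp x y) = pv (pk x) (pk y).
Proof. symmetry. apply pv_pk. Qed.
Lemma pk_wl {a b c} (k : hom B b c) {f g : hom B a b} (x : cell f g) : pk (wl k x) = pwl k (pk x).
Proof. reflexivity. Qed.
Lemma pk_wr {a b c} {f g : hom B b c} (x : cell f g) (k : hom B a b) : pk (wr x k) = pwr (pk x) k.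
Proof. reflexivity. Qed.
Lemma pk_vid {a b} (f : hom B a b) : pk (vid f) = pid f.
Proof. reflexivity. Qed.
Lemma pk_hcomp {a b c} {f f' : hom B b c} {g g' : hom B a b} (x : cell f f') (y : cell g g') :
  pk (hcomp x y) = pv (pwr (pk x) g') (pwl f (pk y)).
Proof.
  unfold pwr, pwl. simpl. rewrite pv_pk. f_equal. unfold wr, wl.
  rewrite <- (interchange _ (tc_ax B)). rewrite (vidl _ (tc_ax B)), (vidr _ (tc_ax B)). reflexivity.
Qed.
End PkLemmas.

Ltac pkify := repeat (rewrite ?pk_cast, ?pk_vcomp, ?pk_wl, ?pk_wr, ?pk_vid, ?pk_hcomp).
Ltac pkify_in H := repeat (rewrite ?pk_cast, ?pk_vcomp, ?pk_wl, ?pk_wr, ?pk_vid, ?pk_hcomp in H).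
Ltac topk := apply pk_inj; pkify.
Ltac topk_in H := apply (f_equal pk) in H; pkify_in H.

Set Implicit Arguments.

Global Hint Rewrite @asc @lid @rid : homeq.

Ltac st_gen tac := repeat (first [rewrite tgt_pv | rewrite src_pv by st_gen tac]);
  cbn [src tgt pwl pwr pid pk projT1 fst snd cl];
  try (autorewrite with homeq; tac; autorewrite with homeq; reflexivity).
Ltac st := st_gen idtac.

Section Core1.
Context {B : TwoCat}.

Lemma otriple_inv {e b : ob B} (p : hom B e b) y (a a' c c' : hom B b y)
  (x : cell (c ⊚ p) (a ⊚ p)) (x' : cell (c' ⊚ p) (a' ⊚ p)) :
  MkOTriple p y a c x = MkOTriple p y a' c' x' -> a = a' /\ c = c' /\ pk x = pk x'.
Proof.
  intro E. split; [|split].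
  - exact (f_equal (t0 p y) E).
  - exact (f_equal (t1 p y) E).
  - exact (f_equal (fun t => pk (tb p y t)) E).
Qed.

Lemma otriple_eq {e b : ob B} (p : hom B e b) y (a a' c c' : hom B b y)
  (x : cell (c ⊚ p) (a ⊚ p)) (x' : cell (c' ⊚ p) (a' ⊚ p)) :
  a = a' -> c = c' -> pk x = pk x' -> MkOTriple p y a c x = MkOTriple p y a' c' x'.
Proof. intros -> -> H. apply pk_inj in H. subst. reflexivity. Qed.

Context {e b : ob B} (p : hom B e b) {P : ob B} (d0 d1 : hom B b P)
  (α : cell (d1 ⊚ p) (d0 ⊚ p)) (Hoc : is_opcomma p P d0 d1 α).

Lemma oc_ex y (h0 h1 : hom B b y) (β : cell (h1 ⊚ p) (h0 ⊚ p)) :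
  exists h : hom B P y, h ⊚ d0 = h0 /\ h ⊚ d1 = h1 /\ pwl h (pk α) = pk β.
Proof.
  destruct (proj1 (Hoc y) (MkOTriple p y h0 h1 β)) as [h [Hh _]].
  exists h. unfold otriple_of in Hh. apply otriple_inv in Hh as [H0 [H1 H2]].
  rewrite pk_cast in H2. auto.
Qed.

Lemma oc_2cell y (h h' : hom B P y) (ξ0 : cell (h ⊚ d0) (h' ⊚ d0)) (ξ1 : cell (h ⊚ d1) (h' ⊚ d1)) :
  pv (pwr (pk ξ0) p) (pwl h (pk α)) = pv (pwl h' (pk α)) (pwr (pk ξ1) p) ->
  exists ξ : cell h h', pwr (pk ξ) d0 = pk ξ0 /\ pwr (pk ξ) d1 = pk ξ1.
Proof.
  intro Hc.
  destruct (proj2 (Hoc y) h h' ξ0 ξ1) as [ξ [[H0 H1] _]].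
  - unfold OTripleMor, otriple_of; simpl. topk. exact Hc.
  - exists ξ. rewrite <- H0, <- H1. split; reflexivity.
Qed.
End Core1.

Ltac nrm_gen tac := repeat first [ rewrite pwl_pv by st_gen tac | rewrite pwr_pv by st_gen tac
  | rewrite pwl_id | rewrite pwr_id | rewrite <- pwl_comp | rewrite <- pwr_comp
  | rewrite pwl_pwr | rewrite pwl_idm | rewrite pwr_idm | rewrite pv_assoc by st_gen tac
  | rewrite pv_idl' by st_gen tac | rewrite pv_idr' by st_gen tac
  | progress (autorewrite with homeq) ].
Ltac nrm := nrm_gen idtac.
Ltac nrm_in_gen tac E := repeat first [ rewrite pwl_pv in E by st_gen tac | rewrite pwr_pv in E by st_gen tac
  | rewrite pwl_id in E | rewrite pwr_id in E | rewrite <- pwl_comp in E | rewrite <- pwr_comp in E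
  | rewrite pwl_pwr in E | rewrite pwl_idm in E | rewrite pwr_idm in E | rewrite pv_assoc in E by st_gen tac
  | rewrite pv_idl' in E by st_gen tac | rewrite pv_idr' in E by st_gen tac
  | progress (autorewrite with homeq in E) ].
Ltac nrm_in E := nrm_in_gen idtac E.
(* rewrite with an equation pv X Y = Z inside a right-associated chain *)
Ltac rwl_gen tac E := match type of E with
  | pv ?X ?Y = _ => first [ rewrite E | rewrite <- (pv_assoc X Y) by st_gen tac; rewrite E ]
  | _ => rewrite E end.
Ltac rwl E := rwl_gen idtac E.
Ltac rwr_gen tac E := match type of E with
  | _ = pv ?X ?Y => first [ rewrite <- E | rewrite <- (pv_assoc X Y) by st_gen tac; rewrite <- E ]
  | _ => rewrite <- E end.
Ltac rwr E := rwr_gen idtac E.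

Ltac natp X Y N := pose proof (pnat X Y) as N; cbn [src tgt pk pwl pwr pid projT1 fst snd] in N.

Set Implicit Arguments.

Section Monad.
Context {B : TwoCat} {e b : ob B} (p : hom B e b) (T : Codensity p).
Local Notation t := (cd_t p T).
Local Notation G := (pk (cd_γ p T)).
Local Notation M := (pk (cd_m p T)).
Local Notation H := (pk (cd_η p T)).

Lemma mE : pv G (pwr M p) = pv G (pwl t G).
Proof. pose proof (cd_mE p T) as E. topk_in E. exact E. Qed.
Lemma ηE : pv G (pwr H p) = pid p.
Proof. pose proof (cd_ηE p T) as E. topk_in E. exact E. Qed.

Lemma ran_uniq (X Y : Cell b b) : src X = src Y -> tgt X = t -> tgt Y = t ->
  pv G (pwr X p) = pv G (pwr Y p) -> X = Y.
Proof.
  destruct X as [[f g] x], Y as [[f' g'] y]. unfold src, tgt; simpl. intros <- -> ->.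
  change (existT _ (?f, ?g) ?x) with (pk x). intro E.
  rewrite !pwr_pk, !pv_pk in E. apply pk_inj in E.
  destruct (cd_ran p T f (vcomp (cd_γ p T) (wr x p))) as [β [_ U]].
  pose proof (U x eq_refl) as U1. pose proof (U y (eq_sym E)) as U2. f_equal. congruence.
Qed.

Lemma mon_unit_r : pv M (pwl t H) = pid t.
Proof.
  apply ran_uniq; [st|st|st|].
    rewrite pwr_pv by st. rewrite <- pwl_pwr. rewrite <- pv_assoc by st. rewrite mE.
  rewrite pv_assoc by st. rewrite <- pwl_pv by st. rewrite ηE, pwl_id, pwr_id.
  reflexivity.
Qed.

Lemma mon_unit_l : pv M (pwr H t) = pid t.
Proof.
  apply ran_uniq; [st|st|st|].
  rewrite pwr_pv by st. rewrite <- pwr_comp. rewrite <- pv_assoc by st. rewrite mE.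
  rewrite pv_assoc by st.
  rewrite <- (@pnat' _ _ _ _ H G (idm b) t (t ⊚ p) p) by reflexivity.
  rewrite pwl_idm. rewrite <- pv_assoc by st. rewrite ηE, pwr_id. rewrite pv_idl' by st.
  rewrite pv_idr' by st. reflexivity.
Qed.

Lemma mon_assoc : pv M (pwl t M) = pv M (pwr M t).
Proof.
  apply ran_uniq; [st|st|st|].
  rewrite !pwr_pv by st. rewrite <- pwl_pwr, <- pwr_comp.
  rewrite <- !pv_assoc by st. rewrite mE.
  rewrite !pv_assoc by st. rewrite <- pwl_pv by st. rewrite mE. rewrite pwl_pv by st.
  rewrite <- (@pnat' _ _ _ _ M G (t ⊚ t) t (t ⊚ p) p) by reflexivity.
  rewrite <- (pv_assoc G (pwr M p)) by st. rewrite mE. rewrite pwl_comp. rewrite pv_assoc by st.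
  reflexivity.
Qed.
End Monad.

Set Implicit Arguments.

Lemma ra {B : TwoCat} {a b c d : ob B} {x : hom B c d} {y : hom B b c} {w : hom B b d} :
  x ⊚ y = w -> forall z : hom B a b, x ⊚ (y ⊚ z) = w ⊚ z.
Proof. intros E z. rewrite <- asc, E. reflexivity. Qed.

Lemma po_ex {B : TwoCat} {s x0 x1 : ob B} (f0 : hom B s x0) (f1 : hom B s x1) Q q0 q1 E
  (Hp : is_pushout f0 f1 Q q0 q1 E) y (k0 : hom B x0 y) (k1 : hom B x1 y) :
  k0 ⊚ f0 = k1 ⊚ f1 -> exists k : hom B Q y, k ⊚ q0 = k0 /\ k ⊚ q1 = k1.
Proof.
  intro Ek. destruct (proj1 (Hp y) (MkPPair f0 f1 y k0 k1 Ek)) as [k [[H0 H1] _]].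
  exists k. auto.
Qed.

Lemma oc_2c {B : TwoCat} {e b : ob B} (p : hom B e b) {P : ob B} (d0 d1 : hom B b P)
  (α : cell (d1 ⊚ p) (d0 ⊚ p)) (Hoc : is_opcomma p P d0 d1 α) y (h h' : hom B P y)
  (X0 X1 : Cell b y) : src X0 = h ⊚ d0 -> tgt X0 = h' ⊚ d0 -> src X1 = h ⊚ d1 -> tgt X1 = h' ⊚ d1 ->
  pv (pwr X0 p) (pwl h (pk α)) = pv (pwl h' (pk α)) (pwr X1 p) ->
  exists ξ : cell h h', pwr (pk ξ) d0 = X0 /\ pwr (pk ξ) d1 = X1.
Proof.
  destruct X0 as [[f0 g0] x0], X1 as [[f1 g1] x1]; unfold src, tgt; simpl.
  intros -> -> -> ->. change (existT _ (?f, ?g) ?x) with (pk x). intro Hc.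
  exact (oc_2cell Hoc _ _ x0 x1 Hc).
Qed.

Lemma oc_1c {B : TwoCat} {e b : ob B} (p : hom B e b) {P : ob B} (d0 d1 : hom B b P)
  (α : cell (d1 ⊚ p) (d0 ⊚ p)) (Hoc : is_opcomma p P d0 d1 α) y (h0 h1 : hom B b y)
  (X : Cell e y) : src X = h1 ⊚ p -> tgt X = h0 ⊚ p ->
  exists h : hom B P y, h ⊚ d0 = h0 /\ h ⊚ d1 = h1 /\ pwl h (pk α) = X.
Proof.
  destruct X as [[f g] x]; unfold src, tgt; simpl. intros -> ->.
  exact (oc_ex Hoc _ _ _ x).
Qed.

Section Desc.
Context {B : TwoCat} {e b : ob B} (p : hom B e b) (C : CokernelDiagram p) (T : Codensity p).
Local Notation t := (cd_t p T).
Local Notation G := (pk (cd_γ p T)).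
Local Notation M := (pk (cd_m p T)).
Local Notation H := (pk (cd_η p T)).
Local Notation P := (ck_P p C).
Local Notation d0 := (ck_d0 p C).
Local Notation d1 := (ck_d1 p C).
Local Notation A := (pk (ck_α p C)).
Local Notation D0 := (ck_D0 p C).
Local Notation D1 := (ck_D1 p C).
Local Notation D2 := (ck_D2 p C).
Local Notation s0 := (ck_s0 p C).

Definition DE' {a : ob B} := ra (a:=a) (ck_DE p C).
Definition D1e1' {a : ob B} := ra (a:=a) (ck_D1e1 p C).
Definition D1e0' {a : ob B} := ra (a:=a) (ck_D1e0 p C).
Definition s0e0' {a : ob B} := ra (a:=a) (ck_s0e0 p C).
Definition s0e1' {a : ob B} := ra (a:=a) (ck_s0e1 p C).
#[local] Hint Rewrite (ck_DE p C) @DE' (ck_D1e1 p C) @D1e1' (ck_D1e0 p C) @D1e0'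
  (ck_s0e0 p C) @s0e0' (ck_s0e1 p C) @s0e1' : homeq.

Lemma D1A : pwl D1 A = pv (pwl D0 A) (pwl D2 A).
Proof. pose proof (ck_D1α p C) as E. topk_in E. exact E. Qed.
Lemma s0A : pwl s0 A = pid p.
Proof. pose proof (ck_s0α p C) as E. topk_in E. exact E. Qed.

Context (r : hom B P b) (r0 : r ⊚ d0 = idm b) (r1 : r ⊚ d1 = t) (rA : pwl r A = G).
Definition r0' {a : ob B} := ra (a:=a) r0.
Definition r1' {a : ob B} := ra (a:=a) r1.
#[local] Hint Rewrite r0 @r0' r1 @r1' : homeq.

Local Notation Hoc := (ck_opcomma p C).

Lemma ex_ρ : exists ρ : cell s0 r, pwr (pk ρ) d0 = pid (idm b) /\ pwr (pk ρ) d1 = H.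
Proof.
  apply (oc_2c Hoc); try st.
  rewrite s0A, rA, pwr_id, ηE. apply pv_idl'. st.
Qed.


Section Obj.
Context {y : ob B} (h : hom B y b).

Lemma desc_unit (β : cell (d1 ⊚ h) (d0 ⊚ h)) (Du : pwl s0 (pk β) = pid h) :
  pv (pwl r (pk β)) (pwr H h) = pid h.
Proof.
  destruct ex_ρ as [ρ [R0 R1]].
  natp (pk ρ) (pk β) N.
  rewrite !pwr_comp, R0, R1, pwr_id, Du in N.
  rewrite <- N. apply pv_idl'. st.
Qed.

Lemma desc_assoc (β : cell (d1 ⊚ h) (d0 ⊚ h))
  (Dc : pv (pwl D0 (pk β)) (pwl D2 (pk β)) = pwl D1 (pk β)) :
  pv (pwl r (pk β)) (pwr M h) = pv (pwl r (pk β)) (pwl t (pwl r (pk β))).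
Proof.
  destruct (po_ex (ck_pushout p C) b (t ⊚ r) r) as [m2 [M2 M0]]; [st|].
  assert (M0' : forall a (X : hom B a P), m2 ⊚ (D0 ⊚ X) = r ⊚ X) by (intros; rewrite <- asc, M0; reflexivity).
  assert (M2' : forall a (X : hom B a P), m2 ⊚ (D2 ⊚ X) = t ⊚ (r ⊚ X)) by (intros; rewrite <- asc, M2, asc; reflexivity).
  assert (zA : pwl m2 (pwl D1 A) = pv G (pwl t G)).
  { rewrite D1A, pwl_pv by st. rewrite <- !pwl_comp, M0, M2, pwl_comp, rA. reflexivity. }
  destruct (oc_2c Hoc (m2 ⊚ D1) r (pid (idm b)) M) as [ζ [Z0 Z1]];
    try st_gen ltac:(rewrite ?M0', ?M2').
  { rewrite pwl_comp, zA, rA, <- mE, pwr_id. apply pv_idl'. st. }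
  natp (pk ζ) (pk β) N.
  rewrite !pwr_comp, Z0, Z1, pwr_id in N.
  rewrite pv_idl' in N by st_gen ltac:(rewrite ?M0', ?M2').
  apply (f_equal (pwl m2)) in Dc. rewrite pwl_pv in Dc by st.
  rewrite <- !pwl_comp, M0, M2, pwl_comp in Dc. rewrite pwl_comp in N.
  rewrite <- N, Dc, pwl_comp. reflexivity.
Qed.
End Obj.

Context (κ : cell d1 (d0 ⊚ t)).
Local Notation K := (pk κ).
Context (E1 : pwl r K = pid t) (E2 : pv (pwl d0 G) (pwr K p) = A)
  (E4 : pv (pwl D0 (pwl d0 M)) (pv (pwl D0 (pwr K t)) (pwl D2 K)) = pwl D1 K).

Lemma sK : pwl s0 K = H.
Proof.
  destruct ex_ρ as [ρ [R0 R1]].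
  natp (pk ρ) (pk κ) N. rewrite !pwr_comp, R0, R1, pwr_id, E1 in N.
  rewrite pv_idl' in N by st. rewrite N. apply pv_idl'. st.
Qed.

Definition Ψc {y} {h : hom B y b} (a : cell (t ⊚ h) h) : cell (d1 ⊚ h) (d0 ⊚ h) :=
  vcomp (wl d0 a) (cast eq_refl (asc d0 t h) (wr κ h)).
Lemma pk_Ψc {y} (h : hom B y b) (a : cell (t ⊚ h) h) : pk (Ψc a) = pv (pwl d0 (pk a)) (pwr K h).
Proof. unfold Ψc. pkify. reflexivity. Qed.

Section Obj2.
Context {y : ob B} (h : hom B y b).

Lemma alg_desc_unit (a : cell (t ⊚ h) h) (Au : pv (pk a) (pwr H h) = pid h) :
  pwl s0 (pk (Ψc a)) = pid h.
Proof.
  rewrite pk_Ψc. nrm. rewrite sK. exact Au.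
Qed.

Lemma alg_desc_coc (a : cell (t ⊚ h) h) (Ac : pv (pk a) (pwr M h) = pv (pk a) (pwl t (pk a))) :
  pv (pwl D0 (pk (Ψc a))) (pwl D2 (pk (Ψc a))) = pwl D1 (pk (Ψc a)).
Proof.
  rewrite !pk_Ψc. nrm.
  natp (pwl D0 K) (pk a) N. nrm_in N. rwl N.
  pose proof (f_equal (pwl (D0 ⊚ d0)) Ac) as Ac'. nrm_in Ac'. nrm. rwr Ac'. nrm.
  pose proof (f_equal (fun X => pwr X h) E4) as E4'. simpl in E4'. nrm_in E4'. rewrite E4'.
  reflexivity.
Qed.

Lemma ΦΨ (a : cell (t ⊚ h) h) : pwl r (pk (Ψc a)) = pk a.
Proof. rewrite pk_Ψc. nrm. rewrite E1. nrm. reflexivity. Qed.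

Lemma rA' {z} (X : hom B b z) : pwl (X ⊚ r) A = pwl X G.
Proof. rewrite pwl_comp, rA. reflexivity. Qed.

Lemma ΨΦ (β : cell (d1 ⊚ h) (d0 ⊚ h)) (Du : pwl s0 (pk β) = pid h)
  (Dc : pv (pwl D0 (pk β)) (pwl D2 (pk β)) = pwl D1 (pk β)) :
  pk β = pv (pwl d0 (pwl r (pk β))) (pwr K h).
Proof.
  pose proof (desc_unit Du) as U.
  destruct (po_ex (ck_pushout p C) P (d1 ⊚ r) (idm P)) as [mm [MM2 MM0]]; [st|].
  assert (MM0' : forall a (X : hom B a P), mm ⊚ (D0 ⊚ X) = X) by (intros; rewrite <- asc, MM0, lid; reflexivity).
  assert (MM2' : forall a (X : hom B a P), mm ⊚ (D2 ⊚ X) = d1 ⊚ (r ⊚ X)) by (intros; rewrite <- asc, MM2, asc; reflexivity).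
  assert (nA : pwl (mm ⊚ D1) A = pv A (pwl d1 G)).
  { rewrite pwl_comp, D1A, pwl_pv by st. rewrite <- !pwl_comp, MM0, MM2, pwl_idm, pwl_comp, rA. reflexivity. }
  destruct (oc_2c Hoc (mm ⊚ D1) (d0 ⊚ r) (pid d0) (pv (pwl d0 M) (pwr K t))) as [ω [Ω0 Ω1]];
    try st_gen ltac:(rewrite ?MM0', ?MM2').
  { rewrite nA, pwr_id. rewrite pv_idl' by st. nrm. rewrite rA'.
    pose proof (f_equal (pwl d0) (mE T)) as mE'. nrm_in mE'. rwl mE'. nrm.
    natp (pk κ) (pk (cd_γ p T)) N. nrm_in N. rwr N. nrm. rwl E2. reflexivity. }
  natp (pk ω) (pk β) N1. rewrite !pwr_comp, Ω0, Ω1 in N1. nrm_in N1.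
  apply (f_equal (pwl mm)) in Dc. rewrite pwl_pv in Dc by st.
  rewrite <- !pwl_comp, MM0, MM2 in Dc. nrm_in Dc.
  rewrite <- Dc in N1.
  rewrite pv_idl' in N1 by st.
  pose proof (f_equal (pwl d1) U) as U'. nrm_in U'.
  pose proof (f_equal (fun X => pv X (pwr (pwl d1 H) h)) N1) as N1'. cbv beta in N1'. nrm_in N1'.
  rewrite U' in N1'. nrm_in N1'.
  rewrite N1' at 1.
  natp (pk κ) (pk (cd_η p T)) N2. apply (f_equal (fun X => pwr X h)) in N2. nrm_in N2.
  rwl N2. nrm.
  pose proof (f_equal (fun X => pwr (pwl d0 X) h) (mon_unit_r T)) as mur. cbv beta in mur. nrm_in mur.
  rwl mur. nrm. reflexivity.
Qed.

End Obj2.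

Lemma mor1 {y} (h h' : hom B y b) (β : cell (d1 ⊚ h) (d0 ⊚ h)) (β' : cell (d1 ⊚ h') (d0 ⊚ h'))
  (ξ : cell h h') :
  pv (pk β') (pwl d1 (pk ξ)) = pv (pwl d0 (pk ξ)) (pk β) ->
  pv (pk ξ) (pwl r (pk β)) = pv (pwl r (pk β')) (pwl t (pk ξ)).
Proof.
  intro Hm. apply (f_equal (pwl r)) in Hm. nrm_in Hm. symmetry. exact Hm.
Qed.

Lemma mor2 {y} (h h' : hom B y b) (a : cell (t ⊚ h) h) (a' : cell (t ⊚ h') h') (ξ : cell h h') :
  pv (pk ξ) (pk a) = pv (pk a') (pwl t (pk ξ)) ->
  pv (pk (Ψc a')) (pwl d1 (pk ξ)) = pv (pwl d0 (pk ξ)) (pk (Ψc a)).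
Proof.
  intro Hm. rewrite !pk_Ψc. nrm.
  natp (pk κ) (pk ξ) N. nrm_in N. rwl N. nrm.
  apply (f_equal (pwl d0)) in Hm. nrm_in Hm. rwr Hm. nrm. reflexivity.
Qed.

Definition Φc {y} {h : hom B y b} (β : cell (d1 ⊚ h) (d0 ⊚ h)) : cell (t ⊚ h) h :=
  cast (ra r1 h) (eq_trans (ra r0 h) (lid h)) (wl r β).
Lemma pk_Φc {y} {h : hom B y b} (β : cell (d1 ⊚ h) (d0 ⊚ h)) : pk (Φc β) = pwl r (pk β).
Proof. unfold Φc. pkify. reflexivity. Qed.

Lemma aobj_eq {y} (h h' : hom B y b) (a : cell (t ⊚ h) h) (a' : cell (t ⊚ h') h') :
  h = h' -> pk a = pk a' -> MkAObj T y h a = MkAObj T y h' a'.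
Proof. intros <- E. apply pk_inj in E. subst. reflexivity. Qed.
Lemma dobj_eq {y} (h h' : hom B y b) (a : cell (d1 ⊚ h) (d0 ⊚ h)) (a' : cell (d1 ⊚ h') (d0 ⊚ h')) :
  h = h' -> pk a = pk a' -> MkDObj C y h a = MkDObj C y h' a'.
Proof. intros <- E. apply pk_inj in E. subst. reflexivity. Qed.
Lemma aobj_inv {y} (h h' : hom B y b) (a : cell (t ⊚ h) h) (a' : cell (t ⊚ h') h') :
  MkAObj T y h a = MkAObj T y h' a' -> h = h' /\ pk a = pk a'.
Proof. intro E. split. exact (f_equal (ah T y) E). exact (f_equal (fun x => pk (aβ T y x)) E). Qed.
Lemma dobj_inv {y} (h h' : hom B y b) (a : cell (d1 ⊚ h) (d0 ⊚ h)) (a' : cell (d1 ⊚ h') (d0 ⊚ h')) :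
  MkDObj C y h a = MkDObj C y h' a' -> h = h' /\ pk a = pk a'.
Proof. intro E. split. exact (f_equal (dh C y) E). exact (f_equal (fun x => pk (dβ C y x)) E). Qed.

Lemma is_alg_pk {y} (h : hom B y b) (a : cell (t ⊚ h) h) :
  is_alg T (MkAObj T y h a) <->
  (pv (pk a) (pwr M h) = pv (pk a) (pwl t (pk a)) /\ pv (pk a) (pwr H h) = pid h).
Proof.
  unfold is_alg; cbn [ah aβ]. split; intros [X Y].
  - topk_in X. topk_in Y. auto.
  - split; topk; assumption.
Qed.
Lemma is_desc_pk {y} (h : hom B y b) (β : cell (d1 ⊚ h) (d0 ⊚ h)) :
  is_desc C (MkDObj C y h β) <->
  (pv (pwl D0 (pk β)) (pwl D2 (pk β)) = pwl D1 (pk β) /\ pwl s0 (pk β) = pid h).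
Proof.
  unfold is_desc; cbn [dh dβ]. split; intros [X Y].
  - topk_in X. topk_in Y. auto.
  - split; topk; assumption.
Qed.

Lemma Φ_alg {y} (h : hom B y b) (β : cell (d1 ⊚ h) (d0 ⊚ h)) :
  is_desc C (MkDObj C y h β) -> is_alg T (MkAObj T y h (Φc β)).
Proof.
  rewrite is_desc_pk, is_alg_pk, pk_Φc. intros [Dc Du].
  split. apply desc_assoc; auto. apply desc_unit; auto.
Qed.
Lemma Ψ_desc {y} (h : hom B y b) (a : cell (t ⊚ h) h) :
  is_alg T (MkAObj T y h a) -> is_desc C (MkDObj C y h (Ψc a)).
Proof.
  rewrite is_desc_pk, is_alg_pk. intros [Ac Au].
  split. apply alg_desc_coc; auto. apply alg_desc_unit; auto.
Qed.

Lemma AMor_pk {y} (h h' : hom B y b) (a : cell (t ⊚ h) h) (a' : cell (t ⊚ h') h') (ξ : cell h h') :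
  AMor T (MkAObj T y h a) (MkAObj T y h' a') ξ <-> pv (pk ξ) (pk a) = pv (pk a') (pwl t (pk ξ)).
Proof. unfold AMor; cbn [ah aβ]. split; intro X; [topk_in X; exact X | topk; exact X]. Qed.
Lemma DMor_pk {y} (h h' : hom B y b) (a : cell (d1 ⊚ h) (d0 ⊚ h)) (a' : cell (d1 ⊚ h') (d0 ⊚ h'))
  (ξ : cell h h') :
  DMor C (MkDObj C y h a) (MkDObj C y h' a') ξ <-> pv (pk a') (pwl d1 (pk ξ)) = pv (pwl d0 (pk ξ)) (pk a).
Proof. unfold DMor; cbn [dh dβ]. split; intro X; [topk_in X; exact X | topk; exact X]. Qed.

Lemma ΨΦ' {y} (h : hom B y b) (β : cell (d1 ⊚ h) (d0 ⊚ h)) :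
  is_desc C (MkDObj C y h β) -> pk (Ψc (Φc β)) = pk β.
Proof.
  rewrite is_desc_pk. intros [Dc Du]. rewrite pk_Ψc, pk_Φc. symmetry. apply ΨΦ; auto.
Qed.

Lemma mor_DA {y} (h h' : hom B y b) (β : cell (d1 ⊚ h) (d0 ⊚ h)) (β' : cell (d1 ⊚ h') (d0 ⊚ h'))
  (ξ : cell h h') : is_desc C (MkDObj C y h β) -> is_desc C (MkDObj C y h' β') ->
  pv (pk ξ) (pwl r (pk β)) = pv (pwl r (pk β')) (pwl t (pk ξ)) ->
  pv (pk β') (pwl d1 (pk ξ)) = pv (pwl d0 (pk ξ)) (pk β).
Proof.
  intros Hd Hd' Hm. rewrite <- (ΨΦ' Hd), <- (ΨΦ' Hd'). apply mor2. rewrite !pk_Φc. exact Hm.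
Qed.

Lemma lax_to_EM (L : ob B) (d : hom B L b) (Ψd : cell (d1 ⊚ d) (d0 ⊚ d)) :
  is_lax_descent C L d Ψd -> is_EM T L d (Φc Ψd).
Proof.
  intros Hl y. destruct (Hl y) as [l1 [l2 l3]].
  assert (Ea : forall g : hom B y L, pk (aβ T y (aobj_of T d (Φc Ψd) g)) =
             pk (Φc (dβ C y (dobj_of C d Ψd g)))).
  { intro g. unfold aobj_of, dobj_of; cbn [aβ dβ]. pkify. rewrite !pk_Φc. pkify. nrm. reflexivity. }
  split; [|split].
  - intro g. pose proof (Φ_alg (l1 g)) as X.
    replace (aobj_of T d (Φc Ψd) g) with (MkAObj T y (d ⊚ g) (Φc (dβ C y (dobj_of C d Ψd g)))).
    exact X. symmetry. apply aobj_eq; [reflexivity|]. apply (Ea g).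
  - intros [h a] Ha. pose proof (Ψ_desc Ha) as Hd. destruct (l2 _ Hd) as [g [Hg Ug]].
    exists g. split.
    + unfold dobj_of in Hg. apply dobj_inv in Hg as [Hh Hc].
      unfold aobj_of. apply aobj_eq; [exact Hh|]. pkify. rewrite pk_Φc.
      pkify_in Hc. rewrite <- pwl_pwr, Hc. apply ΦΨ.
    + intros g' Hg'. apply Ug.
      pose proof (Ea g') as Eg. pose proof (l1 g') as D'. unfold dobj_of in *.
      unfold aobj_of in Hg'. apply aobj_inv in Hg' as [Hh Hc]. subst h. apply dobj_eq; [reflexivity|].
      rewrite <- (ΨΦ' D'). rewrite !pk_Ψc, pk_Φc. pkify_in Hc. rewrite pk_Φc in Hc. rewrite <- Hc.
      pkify. nrm. reflexivity.
  - intros g g' ξ Hm. apply l3.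
    pose proof (l1 g) as D. pose proof (l1 g') as D'. unfold dobj_of in *.
    apply DMor_pk. apply mor_DA; auto.
    unfold aobj_of in Hm. apply AMor_pk in Hm. pkify_in Hm. rewrite pk_Φc in Hm.
    pkify. nrm. nrm_in Hm. exact Hm.
Qed.

Lemma EM_to_lax (L : ob B) (u : hom B L b) (μ : cell (t ⊚ u) u) :
  is_EM T L u μ -> is_lax_descent C L u (Ψc μ).
Proof.
  intros He y. destruct (He y) as [e1 [e2 e3]].
  assert (Ed : forall g : hom B y L, pk (dβ C y (dobj_of C u (Ψc μ) g)) =
             pk (Ψc (aβ T y (aobj_of T u μ g)))).
  { intro g. unfold aobj_of, dobj_of; cbn [aβ dβ]. pkify. rewrite !pk_Ψc. pkify. nrm. reflexivity. }
  split; [|split].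
  - intro g. pose proof (Ψ_desc (e1 g)) as X.
    replace (dobj_of C u (Ψc μ) g) with (MkDObj C y (u ⊚ g) (Ψc (aβ T y (aobj_of T u μ g)))).
    exact X. symmetry. apply dobj_eq; [reflexivity|]. apply (Ed g).
  - intros [h β] Hd. pose proof (Φ_alg Hd) as Ha. destruct (e2 _ Ha) as [g [Hg Ug]].
    exists g. split.
    + unfold aobj_of in Hg. apply aobj_inv in Hg as [Hh Hc]. subst h.
      unfold dobj_of. apply dobj_eq; [reflexivity|].
      rewrite <- (ΨΦ' Hd). rewrite pk_Ψc. pkify_in Hc. rewrite <- Hc. pkify. rewrite pk_Ψc. nrm. reflexivity.
    + intros g' Hg'. apply Ug.
      unfold dobj_of in Hg'. apply dobj_inv in Hg' as [Hh Hc]. subst h.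
      unfold aobj_of. apply aobj_eq; [reflexivity|]. rewrite pk_Φc, <- Hc. pkify. rewrite pk_Ψc.
      nrm. rewrite E1. nrm. reflexivity.
  - intros g g' ξ Hm. apply e3.
    unfold dobj_of in Hm. apply DMor_pk in Hm. apply mor1 in Hm.
    unfold aobj_of. apply AMor_pk. pkify. pkify_in Hm. rewrite !pk_Ψc in Hm. nrm_in Hm. rewrite E1 in Hm.
    nrm_in Hm. exact Hm.
Qed.

End Desc.

Set Implicit Arguments.

Lemma ex_cell {B : TwoCat} {a b : ob B} (X : Cell a b) (f g : hom B a b) :
  src X = f -> tgt X = g -> exists x : cell f g, pk x = X.
Proof. destruct X as [[f' g'] x]. unfold src, tgt; simpl. intros <- <-. exists x. reflexivity. Qed.

Ltac grp L := match L with
  | pv ?X (pv ?Y ?Z) => grp (pv Y Z); rewrite <- (pv_assoc X (pv Y Z)) by st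
  | pv ?X ?Y => rewrite <- (pv_assoc X Y) by st end.
Ltac seg E := match type of E with ?L = _ => first [rewrite E | grp L; rewrite E] end; nrm.
Ltac segr E := match type of E with _ = ?L => first [rewrite <- E | grp L; rewrite <- E] end; nrm.

Section Adj.
Context {B : TwoCat} {e b : ob B} (p : hom B e b) (C : CokernelDiagram p) (T : Codensity p).
Local Notation t := (cd_t p T).
Local Notation G := (pk (cd_γ p T)).
Local Notation M := (pk (cd_m p T)).
Local Notation H := (pk (cd_η p T)).
Local Notation P := (ck_P p C).
Local Notation d0 := (ck_d0 p C).
Local Notation d1 := (ck_d1 p C).
Local Notation A := (pk (ck_α p C)).
Local Notation D0 := (ck_D0 p C).
Local Notation D1 := (ck_D1 p C).
Local Notation D2 := (ck_D2 p C).
Local Notation s0 := (ck_s0 p C).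
Local Notation Hoc := (ck_opcomma p C).
#[local] Hint Rewrite (ck_DE p C) (@DE' _ _ _ p C) (ck_D1e1 p C) (@D1e1' _ _ _ p C) (ck_D1e0 p C) (@D1e0' _ _ _ p C)
  (ck_s0e0 p C) (@s0e0' _ _ _ p C) (ck_s0e1 p C) (@s0e1' _ _ _ p C) : homeq.

Context (f : hom B b e) (η : cell (idm b) (p ⊚ f)) (ε : cell (f ⊚ p) (idm e))
  (T2 : pv (pwl p (pk ε)) (pwr (pk η) p) = pid p).

Lemma ex_φ : exists φ : cell (p ⊚ f) t, pv G (pwr (pk φ) p) = pwl p (pk ε).
Proof.
  destruct (@ex_cell _ _ _ (pwl p (pk ε)) ((p ⊚ f) ⊚ p) p) as [δ Hδ]; [st|st|].
  destruct (cd_ran p T (p ⊚ f) δ) as [φ [Hφ _]]. exists φ. rewrite <- Hδ, <- Hφ. pkify. reflexivity.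
Qed.


Context (φ : cell (p ⊚ f) t) (Hφ : pv G (pwr (pk φ) p) = pwl p (pk ε)).
Local Notation Φ := (pk φ).
Local Notation Ep := (pk ε).
Local Notation Hη := (pk η).

Lemma MΦ : pv M (pv (pwr Φ t) (pwl (p ⊚ f) Φ)) = pv Φ (pwl p (pwr Ep f)).
Proof.
  apply (ran_uniq T); [st|st|st|].
  nrm. rewrite <- (pv_assoc G (pwr M p)) by st. rewrite (mE T). nrm.
  natp (pk φ) (pk (cd_γ p T)) N. nrm_in N. segr N.
  seg Hφ. pose proof (f_equal (pwl (p ⊚ f)) Hφ) as Hφ'. nrm_in Hφ'. seg Hφ'.
  natp (pk ε) (pk ε) N2. nrm_in N2. pose proof (f_equal (pwl p) N2) as N3. nrm_in N3.
  rewrite N3. seg Hφ. reflexivity.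
Qed.

Context (r : hom B P b) (r0 : r ⊚ d0 = idm b) (r1 : r ⊚ d1 = t) (rA : pwl r A = G).
Definition r0x {a : ob B} := ra (a:=a) r0.
Definition r1x {a : ob B} := ra (a:=a) r1.
#[local] Hint Rewrite r0 @r0x r1 @r1x : homeq.
Context (κ : cell d1 (d0 ⊚ t)) (Hκ : pk κ = pv (pwl d0 Φ) (pv (pwr A f) (pwl d1 Hη))).
Local Notation K := (pk κ).

Lemma E1 : pwl r K = pid t.
Proof.
  apply (ran_uniq T); [st|st|st|].
  rewrite Hκ. nrm. rewrite rA. nrm. seg Hφ.
  natp (pk (cd_γ p T)) (pk ε) N. nrm_in N. segr N.
  pose proof (f_equal (pwl t) T2) as T2'. nrm_in T2'. seg T2'. reflexivity.
Qed.

Lemma E2 : pv (pwl d0 G) (pwr K p) = A.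
Proof.
  rewrite Hκ. nrm.
  pose proof (f_equal (pwl d0) Hφ) as H1. nrm_in H1. seg H1.
  natp (pk (ck_α p C)) (pk ε) N. nrm_in N. segr N.
  pose proof (f_equal (pwl d1) T2) as T2'. nrm_in T2'. seg T2'. reflexivity.
Qed.

Lemma E4 : pv (pwl D0 (pwl d0 M)) (pv (pwl D0 (pwr K t)) (pwl D2 K)) = pwl D1 K.
Proof.
  rewrite Hκ. nrm.
  natp (pk η) (pk φ) N1. nrm_in N1. apply (f_equal (pwl (D0 ⊚ d1))) in N1. nrm_in N1. seg N1.
  natp (pwl D0 A) (pwl f (pk φ)) N2. nrm_in N2. seg N2.
  pose proof (f_equal (pwl (D0 ⊚ d0)) MΦ) as N3. nrm_in N3. seg N3.
  natp (pwl D0 A) (pk ε) N4. apply (f_equal (fun X => pwr X f)) in N4. nrm_in N4. segr N4.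
  pose proof (f_equal (fun X => pwr (pwl (D0 ⊚ d1) X) f) T2) as N5. cbv beta in N5. nrm_in N5. seg N5.
  pose proof (f_equal (fun X => pwr X f) (D1A C)) as N6. cbv beta in N6. nrm_in N6. segr N6.
  reflexivity.
Qed.
End Adj.

Section AdjMain.
Context {B : TwoCat} {e b : ob B} (p : hom B e b) (C : CokernelDiagram p) (T : Codensity p).
Local Notation t := (cd_t p T).
Local Notation G := (pk (cd_γ p T)).
Local Notation A := (pk (ck_α p C)).
Local Notation d0 := (ck_d0 p C).
Local Notation d1 := (ck_d1 p C).
Context (f : hom B b e) (η : cell (idm b) (p ⊚ f)) (ε : cell (f ⊚ p) (idm e))
  (T2 : pv (pwl p (pk ε)) (pwr (pk η) p) = pid p).

Lemma adj_data : exists (r : hom B (ck_P p C) b) (r0 : r ⊚ d0 = idm b) (r1 : r ⊚ d1 = t)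
  (rA : pwl r A = G) (κ : cell d1 (d0 ⊚ t)),
  pwl r (pk κ) = pid t /\ pv (pwl d0 G) (pwr (pk κ) p) = A /\
  pv (pwl (ck_D0 p C) (pwl d0 (pk (cd_m p T)))) (pv (pwl (ck_D0 p C) (pwr (pk κ) t)) (pwl (ck_D2 p C) (pk κ)))
    = pwl (ck_D1 p C) (pk κ).
Proof.
  destruct (ex_φ T f ε) as [φ Hφ].
  destruct (oc_1c (ck_opcomma p C) (idm b) t G) as [r [r0 [r1 rA]]]; [st|st|].
  destruct (@ex_cell _ _ _ (pv (pwl d0 (pk φ)) (pv (pwr A f) (pwl d1 (pk η)))) d1 (d0 ⊚ t))
    as [κ Hκ]; [st|st|].
  exists r, r0, r1, rA, κ. split; [|split].
  - exact (E1 C T f η T2 φ Hφ r0 r1 rA Hκ).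
  - eapply E2; eassumption.
  - exact (E4 C T f η T2 φ Hφ Hκ).
Qed.

Lemma adj_lax_to_EM (L : ob B) (d : hom B L b) (Ψd : cell (d1 ⊚ d) (d0 ⊚ d)) :
  is_lax_descent C L d Ψd -> exists μ : cell (t ⊚ d) d, is_EM T L d μ /\
    (forall pH : hom B e L, d ⊚ pH = p -> pwr (pk Ψd) pH = A -> pwr (pk μ) pH = G).
Proof.
  intro Hl. destruct adj_data as [r [r0 [r1 [rA [κ [X1 [X2 X4]]]]]]].
  exists (Φc C T r r0 r1 Ψd). split.
  - exact (lax_to_EM T r0 r1 rA X1 X2 X4 Hl).
  - intros pH E HA. rewrite pk_Φc, <- pwl_pwr, HA. exact rA.
Qed.

Lemma adj_EM_to_lax (L : ob B) (u : hom B L b) (μ : cell (t ⊚ u) u) :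
  is_EM T L u μ -> exists Ψ : cell (d1 ⊚ u) (d0 ⊚ u), is_lax_descent C L u Ψ /\
    (forall pT : hom B e L, u ⊚ pT = p -> pwr (pk μ) pT = G -> pwr (pk Ψ) pT = A).
Proof.
  intro He. destruct adj_data as [r [r0 [r1 [rA [κ [X1 [X2 X4]]]]]]].
  exists (Ψc C T κ μ). split.
  - exact (EM_to_lax C r0 r1 rA X1 X2 X4 He).
  - intros pT E HG. rewrite pk_Ψc. nrm. rewrite <- pwl_pwr, HG.
    rewrite E. exact X2.
Qed.
End AdjMain.

Set Implicit Arguments.

Section AdjUtil.
Context {B : TwoCat}.

Lemma is_adjunction_pk {a b : ob B} (f : hom B b a) (g : hom B a b) :
  is_adjunction f g <-> exists (η : cell (idm b) (g ⊚ f)) (ε : cell (f ⊚ g) (idm a)),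
    pv (pwr (pk ε) f) (pwl f (pk η)) = pid f /\ pv (pwl g (pk ε)) (pwr (pk η) g) = pid g.
Proof.
  unfold is_adjunction. split; intros [η [ε [X Y]]]; exists η, ε.
  - topk_in X. topk_in Y. auto.
  - split; topk; assumption.
Qed.

Definition inv {a b : ob B} (X : Cell a b) : Prop :=
  exists Y, pv Y X = pid (src X) /\ pv X Y = pid (tgt X) /\ src Y = tgt X /\ tgt Y = src X.

Lemma inv_pk {a b : ob B} (f g : hom B a b) : iso2 f g -> exists (x : cell f g) (y : cell g f),
  pv (pk y) (pk x) = pid f /\ pv (pk x) (pk y) = pid g.
Proof. intros [x [y [X Y]]]. exists x, y. split; rewrite pv_pk; [rewrite X|rewrite Y]; reflexivity. Qed.

Lemma adj_comp {a b c : ob B} (f : hom B b a) (g : hom B a b) (f' : hom B a c) (g' : hom B c a) :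
  is_adjunction f g -> is_adjunction f' g' -> is_adjunction (f' ⊚ f) (g ⊚ g').
Proof.
  rewrite !is_adjunction_pk. intros [η [ε [T1 T2]]] [η' [ε' [T1' T2']]].
  destruct (@ex_cell _ _ _ (pv (pwr (pwl g (pk η')) f) (pk η)) (idm b) ((g ⊚ g') ⊚ (f' ⊚ f)))
    as [η2 Hη2]; [st|st|].
  destruct (@ex_cell _ _ _ (pv (pk ε') (pwr (pwl f' (pk ε)) g')) ((f' ⊚ f) ⊚ (g ⊚ g')) (idm c))
    as [ε2 Hε2]; [st|st|].
  exists η2, ε2. rewrite Hη2, Hε2. split.
  - nrm.
    natp (pk ε) (pk η') N. nrm_in N. apply (f_equal (fun X => pwr (pwl f' X) f)) in N. nrm_in N. seg N.
    pose proof (f_equal (fun X => pwr X f) T1') as N1. cbv beta in N1. nrm_in N1. seg N1.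
    pose proof (f_equal (pwl f') T1) as N2. nrm_in N2. seg N2. reflexivity.
  - nrm.
    natp (pk η') (pk ε) N. nrm_in N. apply (f_equal (fun X => pwr (pwl g X) g')) in N. nrm_in N. segr N.
    pose proof (f_equal (pwl g) T2') as N1. nrm_in N1. seg N1.
    pose proof (f_equal (fun X => pwr X g') T2) as N2. cbv beta in N2. nrm_in N2. seg N2. reflexivity.
Qed.

Lemma equiv_adj {a b : ob B} (G : hom B a b) : is_equivalence G -> exists F : hom B b a, is_adjunction F G.
Proof.
  intros [F [I1 I2]]. exists F. apply is_adjunction_pk.
  destruct (inv_pk I1) as [e0 [e0i [Ea Eb]]]. destruct (inv_pk I2) as [hinv [h [Ha Hb]]].
  destruct (@ex_cell _ _ _ (pv (pk e0) (pv (pwr (pwl F (pk hinv)) G) (pwr (pk e0i) (F ⊚ G))))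
     (F ⊚ G) (idm a)) as [eps Heps]; [st|st|].
  destruct (@ex_cell _ _ _ (pv (pwr (pk e0) (F ⊚ G)) (pv (pwr (pwl F (pk h)) G) (pk e0i)))
     (idm a) (F ⊚ G)) as [epsi Hepsi]; [st|st|].
  assert (T1 : pv (pwr (pk eps) F) (pwl F (pk h)) = pid F).
  { rewrite Heps. nrm.
    natp (pk e0i) (pwl F (pk h)) N. nrm_in N. seg N.
    natp (pk hinv) (pk h) N2. nrm_in N2. rewrite Ha in N2. apply (f_equal (pwl F)) in N2. nrm_in N2. seg N2.
    pose proof (f_equal (fun X => pwr X F) Eb) as N3. cbv beta in N3. nrm_in N3. seg N3. reflexivity. }
  exists h, eps. split; [exact T1|].
  assert (I3 : pv (pk epsi) (pk eps) = pid (F ⊚ G) /\ pv (pk eps) (pk epsi) = pid (idm a)).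
  { rewrite Heps, Hepsi. split; nrm.
    - seg Ea. pose proof (f_equal (fun X => pwr (pwl F X) G) Ha) as N. cbv beta in N. nrm_in N. seg N.
      pose proof (f_equal (fun X => pwr X (F ⊚ G)) Eb) as N'. cbv beta in N'. nrm_in N'. seg N'. reflexivity.
    - pose proof (f_equal (fun X => pwr X (F ⊚ G)) Ea) as N'. cbv beta in N'. nrm_in N'. seg N'.
      pose proof (f_equal (fun X => pwr (pwl F X) G) Hb) as N. cbv beta in N. nrm_in N. seg N.
      seg Eb. reflexivity. }
  destruct I3 as [I3a I3b].
  set (X := pv (pwl G (pk eps)) (pwr (pk h) G)).
  assert (XX : pv X X = X).
  { unfold X. nrm.
    natp (pk h) (pwl G (pk eps)) N1. nrm_in N1. seg N1.
    natp (pk eps) (pk eps) N2. nrm_in N2. apply (f_equal (pwl G)) in N2. nrm_in N2. seg N2.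
    natp (pk h) (pk h) N3. nrm_in N3. apply (f_equal (fun X => pwr X G)) in N3. nrm_in N3. seg N3.
    apply (f_equal (fun X => pwr (pwl G X) G)) in T1. nrm_in T1. seg T1. reflexivity. }
  set (Y := pv (pwr (pk hinv) G) (pwl G (pk epsi))).
  assert (YX : pv Y X = pid G).
  { unfold X, Y. nrm. apply (f_equal (pwl G)) in I3a. nrm_in I3a. seg I3a.
    apply (f_equal (fun X => pwr X G)) in Hb. nrm_in Hb. seg Hb. reflexivity. }
  assert (E : pv (pid G) X = X) by (apply pv_idl'; unfold X; st).
  rewrite <- E. rewrite <- YX at 1. rewrite pv_assoc by (unfold X, Y; st). rewrite XX. exact YX.
Qed.
End AdjUtil.

Section MonadicAdj.
Context {B : TwoCat} {e b : ob B} (p : hom B e b).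

Lemma monadic_left_adj : is_monadic p -> has_left_adjoint p.
Proof.
  intros [T [bT [u [μ [He [pT [E [Hγ Heq]]]]]]]].
  set (t := cd_t p T).
  assert (Halg : is_alg T (MkAObj T b t (cd_m p T))).
  { apply is_alg_pk. split.
    - symmetry. apply mon_assoc.
    - apply mon_unit_l. }
  destruct (proj1 (proj2 (He b)) _ Halg) as [F [HF _]].
  unfold aobj_of in HF. apply aobj_inv in HF as [uF MF]. pkify_in MF.
  assert (MF' : forall z (X : hom B z b), pwr (pk μ) (F ⊚ X) = pwr (pk (cd_m p T)) X).
  { intros. rewrite pwr_comp, MF. reflexivity. }
  assert (uF' : forall z (X : hom B z b), u ⊚ (F ⊚ X) = t ⊚ X).
  { intros. rewrite <- asc, uF. reflexivity. }
  pose proof (proj1 (He bT) (idm bT)) as Ha. unfold aobj_of in Ha. apply is_alg_pk in Ha as [Ha1 Ha2].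
  pkify_in Ha1. pkify_in Ha2. nrm_in Ha1. nrm_in Ha2.
  destruct (@ex_cell _ _ _ (pk μ) (u ⊚ (F ⊚ u)) (u ⊚ idm bT)) as [ξ Hξ];
    [st_gen ltac:(rewrite ?uF') | st |].
  destruct (proj2 (proj2 (He bT)) (F ⊚ u) (idm bT) ξ) as [ε1 [Hε1 _]].
  { unfold aobj_of. apply AMor_pk. pkify. rewrite Hξ. nrm. rewrite MF'. exact Ha1. }
  destruct (@ex_cell _ _ _ (pk (cd_η p T)) (idm b) (u ⊚ F)) as [ηF HηF]; [st|st_gen ltac:(rewrite ?uF)|].
  assert (Eε : pwl u (pk ε1) = pk μ) by (rewrite <- Hξ, <- Hε1; reflexivity).
  assert (Hadj1 : is_adjunction F u).
  { apply is_adjunction_pk. exists ηF, ε1. split.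
    - destruct (@ex_cell _ _ _ (pv (pwr (pk ε1) F) (pwl F (pk ηF))) F F) as [θ Hθ]; [st|st|].
      rewrite <- Hθ. unfold pid. apply (f_equal pk).
      destruct (proj2 (proj2 (He b)) F F (vid (u ⊚ F))) as [θ0 [_ U]].
      { unfold aobj_of. apply AMor_pk. pkify. nrm. reflexivity. }
      transitivity θ0; [symmetry; apply U|apply U].
      + apply pk_inj. pkify. rewrite Hθ. nrm.
        rewrite Eε, MF, HηF. fold t. rewrite uF. apply mon_unit_r.
      + apply (hvid _ (tc_ax B)).
    - rewrite Eε, HηF. exact Ha2. }
  destruct (equiv_adj Heq) as [q Hq]. exists (q ⊚ F). rewrite <- E. apply adj_comp; assumption.
Qed.
End MonadicAdj.

Section AdjCod.
Context {B : TwoCat} {e b : ob B} (p : hom B e b) (f : hom B b e)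
  (η : cell (idm b) (p ⊚ f)) (ε : cell (f ⊚ p) (idm e))
  (T1 : pv (pwr (pk ε) f) (pwl f (pk η)) = pid f) (T2 : pv (pwl p (pk ε)) (pwr (pk η) p) = pid p).

Lemma adj_codensity : inhabited (Codensity p).
Proof.
  destruct (@ex_cell _ _ _ (pwl p (pk ε)) ((p ⊚ f) ⊚ p) p) as [γ Hγ]; [st|st|].
  destruct (@ex_cell _ _ _ (pwl p (pwr (pk ε) f)) ((p ⊚ f) ⊚ (p ⊚ f)) (p ⊚ f)) as [m Hm]; [st|st|].
  assert (ran : forall (k : hom B b b) (δ : cell (k ⊚ p) p),
      exists! β : cell k (p ⊚ f), vcomp γ (wr β p) = δ).
  { intros k δ. destruct (@ex_cell _ _ _ (pv (pwr (pk δ) f) (pwl k (pk η))) k (p ⊚ f)) as [β Hβ]; [st|st|].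
    exists β. split.
    - topk. rewrite Hγ, Hβ. nrm.
      natp (pk δ) (pk ε) N. nrm_in N. segr N.
      pose proof (f_equal (pwl k) T2) as N2. nrm_in N2. seg N2. reflexivity.
    - intros β' Hβ'. topk_in Hβ'. rewrite <- Hβ', Hγ in Hβ. apply pk_inj. rewrite Hβ. nrm.
      natp (pk β') (pk η) N. nrm_in N. seg N.
      pose proof (f_equal (pwl p) T1) as N2. nrm_in N2. seg N2. reflexivity. }
  assert (mE : cast (asc (p ⊚ f) (p ⊚ f) p) eq_refl (vcomp γ (wr m p)) = vcomp γ (wl (p ⊚ f) γ)).
  { topk. rewrite Hγ, Hm. nrm.
    natp (pk ε) (pk ε) N. nrm_in N. apply (f_equal (pwl p)) in N. nrm_in N. rewrite N. reflexivity. }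
  assert (ηE : cast (lid p) eq_refl (vcomp γ (wr η p)) = vid p).
  { topk. rewrite Hγ. exact T2. }
  exact (inhabits (@MkCodensity B e b p (p ⊚ f) γ ran m mE η ηE)).
Qed.
End AdjCod.

Set Implicit Arguments.

Theorem core_monadic {B : TwoCat} {e b : ob B} (p : hom B e b) :
  has_cokernel_diagram p -> (is_monadic p <-> has_left_adjoint p /\ is_effective_faithful p).
Proof.
  intros [C]. split.
  - intro Hm. pose proof (monadic_left_adj Hm) as LA. split; [exact LA|].
    destruct LA as [f Hadj]. apply is_adjunction_pk in Hadj as [η [ε [T1 T2]]].
    destruct Hm as [T [bT [u [μ [He [pT [E [Hγ Heq]]]]]]]].
    destruct (adj_EM_to_lax C f η ε T2 He) as [Ψ [Hl HΨ]].
    exists C, bT, u, Ψ. split; [exact Hl|]. exists pT, E. split; [|exact Heq].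
    apply cast_pk. pkify. apply HΨ; [exact E|]. topk_in Hγ. exact Hγ.
  - intros [[f Hadj] Hef]. apply is_adjunction_pk in Hadj as [η [ε [T1 T2]]].
    destruct Hef as [C' [L [d [Ψ [Hl [pH [E [HA Heq]]]]]]]].
    destruct (@adj_codensity _ _ _ p f η ε T1 T2) as [T].
    destruct ((@adj_lax_to_EM _ _ _ _ C' T f η ε T2 _ _ _ Hl)) as [μ [He Hμ]].
    exists T, L, d, μ. split; [exact He|]. exists pH, E. split; [|exact Heq].
    apply cast_pk. pkify. apply Hμ; [exact E|]. topk_in HA. exact HA.
Qed.

Set Implicit Arguments.

Definition coData (C : TwoCatData) : TwoCatData :=
  {| ob := ob C;
     hom := hom C;
     idm := @idm C;
     comp := @comp C;
     cell := fun a b (f g : hom C a b) => @cell C a b g f;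
     vid := @vid C;
     vcomp := fun a b f g h β α => @vcomp C a b h g f α β;
     hcomp := fun a b c f f' g g' β α => @hcomp C a b c f' f g' g β α |}.

Lemma cast_co (C : TwoCatData) (a b : ob C) (f f' g g' : hom C a b)
  (e1 : f = f') (e2 : g = g') (x : @cell C a b g f) :
  @cast (coData C) a b f f' g g' e1 e2 x = @cast C a b g g' f f' e2 e1 x.
Proof. destruct e1, e2; reflexivity. Qed.

Lemma cast_op (C : TwoCatData) (a b : ob C) (f f' g g' : hom C b a)
  (e1 : f = f') (e2 : g = g') (x : @cell C b a f g) :
  @cast (opData C) a b f f' g g' e1 e2 x = @cast C b a f f' g g' e1 e2 x.
Proof. destruct e1, e2; reflexivity. Qed.

Definition coAx (C : TwoCatData) (H : TwoCatAxioms C) : TwoCatAxioms (coData C).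
Proof.
  unshelve eapply (Build_TwoCatAxioms (coData C)
    (fun a b c d h g f => assoc C H a b c d h g f)
    (fun a b f => idl C H a b f) (fun a b f => idr C H a b f)); simpl; intros.
  - symmetry; apply (vassoc C H).
  - apply (vidr C H).
  - apply (vidl C H).
  - apply (hvid C H).
  - apply (interchange C H).
  - rewrite cast_co. exact (hassoc C H _ _ _ _ _ _ _ _ _ _ γ β α).
  - rewrite cast_co. exact (hidl C H _ _ _ _ α).
  - rewrite cast_co. exact (hidr C H _ _ _ _ α).
Defined.

Definition co (A : TwoCat) : TwoCat := @MkTwoCat (coData A) (@coAx A (tc_ax A)).

Lemma coop_co (A : TwoCat) : coop A = co (op A).
Proof.
  unfold coop, co. simpl.
  assert (E : coopData A = coData (opData A)) by reflexivity.
  f_equal. apply proof_irrelevance.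
Qed.

Lemma coco (A : TwoCat) : co (co A) = A.
Proof.
  destruct A as [[ob hom idm comp cell vid vcomp hcomp] ax]. unfold co. simpl. f_equal. apply proof_irrelevance.
Qed.

Ltac dunf := unfold wl, wr, lid, rid, asc in *;
  cbn [co op coop tc_data coData opData coopData vcomp hcomp vid comp idm cell hom ob] in *;
  rewrite ?cast_co, ?cast_op in *.

Lemma op_adj (X : TwoCat) (a b : ob X) (f : hom X a b) (g : hom X b a) :
  @is_adjunction (op X) a b f g <-> @is_adjunction X a b g f.
Proof.
  unfold is_adjunction. split; intros [η [ε [H1 H2]]]; exists η, ε; dunf.
  - split.
    + topk_in H2. topk. nrm_in H2. nrm. exact H2.
    + topk_in H1. topk. nrm_in H1. nrm. exact H1.
  - split.
    + topk_in H2. topk. nrm_in H2. nrm. exact H2.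
    + topk_in H1. topk. nrm_in H1. nrm. exact H1.
Qed.

Lemma co_adj (X : TwoCat) (a b : ob X) (f : hom X b a) (g : hom X a b) :
  @is_adjunction (co X) a b f g <-> @is_adjunction X b a g f.
Proof.
  unfold is_adjunction. split; intros [η [ε [H1 H2]]]; [exists ε, η | exists ε, η]; dunf;
  topk_in H1; topk_in H2; nrm_in H1; nrm_in H2; split; topk; nrm; first [exact H1 | exact H2].
Qed.

Section CoTransfer.
Context (X : TwoCat).

Lemma pkco_iff {a b : ob X} (f g f' g' : hom X a b) (x : @cell X a b g f) (y : @cell X a b g' f') :
  @pk (co X) a b f g x = @pk (co X) a b f' g' y <-> @pk X a b g f x = @pk X a b g' f' y.
Proof.
  split; intro H.
  - assert (E1 : f = f') by exact (f_equal (fun Z => fst (projT1 Z)) H).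
    assert (E2 : g = g') by exact (f_equal (fun Z => snd (projT1 Z)) H). subst.
    apply (@pk_inj (co X)) in H. subst. reflexivity.
  - assert (E1 : f = f') by exact (f_equal (fun Z => snd (projT1 Z)) H).
    assert (E2 : g = g') by exact (f_equal (fun Z => fst (projT1 Z)) H). subst.
    apply pk_inj in H. subst. reflexivity.
Qed.

Lemma otriple_iff {B : TwoCat} {e b : ob B} (p : hom B e b) y (a a' c c' : hom B b y)
  (x : @cell B e y (c ⊚ p) (a ⊚ p)) (x' : @cell B e y (c' ⊚ p) (a' ⊚ p)) :
  MkOTriple p y a c x = MkOTriple p y a' c' x' <-> a = a' /\ c = c' /\ pk x = pk x'.
Proof. split; [apply otriple_inv | intros [? [? ?]]; apply otriple_eq; auto]. Qed.

Lemma opcomma_co {e b : ob X} (p : hom X e b) (P : ob X) (d0 d1 : hom X b P)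
  (α : @cell X e P (d1 ⊚ p) (d0 ⊚ p)) :
  is_opcomma p P d0 d1 α -> @is_opcomma (co X) e b p P d1 d0 α.
Proof.
  intros Hoc y. destruct (Hoc y) as [H1 H2]. split.
  - intros [a c x]. destruct (H1 (MkOTriple p y c a x)) as [h [Hh U]].
    exists h. unfold otriple_of in *. split.
    + apply otriple_iff in Hh as [E1 [E2 E3]]. apply (@otriple_iff (co X)).
      split; [exact E2|split; [exact E1|]]. apply pkco_iff. dunf. rewrite pk_cast in *. exact E3.
    + intros h' Hh'. apply U. apply (@otriple_iff (co X)) in Hh' as [E1 [E2 E3]].
      apply otriple_iff. split; [exact E2|split; [exact E1|]]. apply pkco_iff in E3. dunf.
      rewrite pk_cast in *. exact E3.
  - intros h h' ξ0 ξ1 Hm. destruct (H2 h' h ξ1 ξ0) as [ξ [[Hξ0 Hξ1] U]].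
    + unfold OTripleMor, otriple_of in *. dunf. topk_in Hm. topk. symmetry. exact Hm.
    + exists ξ. split; [split; assumption|]. intros ξ' [Hξ0' Hξ1']. apply U. split; assumption.
Qed.

Lemma pushout_co {s x0 x1 : ob X} (f0 : hom X s x0) (f1 : hom X s x1) Q q0 q1 E :
  is_pushout f0 f1 Q q0 q1 E -> @is_pushout (co X) s x1 x0 f1 f0 Q q1 q0 (eq_sym E).
Proof.
  intros Hp y. destruct (Hp y) as [H1 H2]. split.
  - intros [k0 k1 ke]. destruct (H1 (MkPPair f0 f1 y k1 k0 (eq_sym ke))) as [k [[Hk0 Hk1] U]].
    exists k. simpl in *. split; [split; assumption|]. intros k' [E0 E1]. apply U. split; assumption.
  - intros k k' ξ0 ξ1 Hm. destruct (H2 k' k ξ1 ξ0) as [ξ [[Hξ0 Hξ1] U]].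
    + clear H1 H2. unfold PPairMor, ppair_of in *. cbn [k0 k1 ke] in *. dunf. apply cast_pk. topk_in Hm.
      pkify. nrm_in Hm. nrm. symmetry. exact Hm.
    + exists ξ. split; [split; assumption|]. intros ξ' [Hξ0' Hξ1']. apply U. split; assumption.
Qed.
End CoTransfer.


Section CoCok.
Context (X : TwoCat) {e b : ob X} (p : hom X e b) (C : CokernelDiagram p).

Definition co_cok : @CokernelDiagram (co X) e b p.
Proof.
  refine (@MkCokernelDiagram (co X) e b p (ck_P p C) (ck_d1 p C) (ck_d0 p C) (ck_α p C) _
    (ck_Q p C) (ck_D2 p C) (ck_D0 p C) (eq_sym (ck_DE p C)) _ (ck_D1 p C) (ck_D1e0 p C) (ck_D1e1 p C) _
    (ck_s0 p C) (ck_s0e1 p C) (ck_s0e0 p C) _).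
  - exact (opcomma_co (ck_opcomma p C)).
  - exact (pushout_co (ck_pushout p C)).
  - dunf. apply cast_pk. pkify. nrm. rewrite (D1A C). nrm. reflexivity.
  - dunf. apply cast_pk. pkify. nrm. exact (s0A C).
Defined.
End CoCok.

Lemma DObj_iff {B : TwoCat} {e b : ob B} {p : hom B e b} (C : CokernelDiagram p) y (h h' : hom B y b)
  (β : cell (ck_d1 p C ⊚ h) (ck_d0 p C ⊚ h)) (β' : cell (ck_d1 p C ⊚ h') (ck_d0 p C ⊚ h')) :
  MkDObj C y h β = MkDObj C y h' β' <-> h = h' /\ pk β = pk β'.
Proof.
  split.
  - intro E. split. exact (f_equal (dh C y) E). exact (f_equal (fun x => pk (dβ C y x)) E).
  - intros [<- E]. apply pk_inj in E. subst. reflexivity.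
Qed.

Section CoEff.
Context (X : TwoCat) {e b : ob X} (p : hom X e b) (C : CokernelDiagram p).
Local Notation C' := (co_cok C).

Lemma desc_co_iff y (h : hom X y b) (β : @cell X y (ck_P p C) (ck_d1 p C ⊚ h) (ck_d0 p C ⊚ h)) :
  is_desc C' (MkDObj C' y h β) <-> is_desc C (MkDObj C y h β).
Proof.
  unfold is_desc, co_cok. cbn [dh dβ ck_D0 ck_D1 ck_D2 ck_d0 ck_d1 ck_s0 ck_P ck_Q ck_DE ck_D1e0 ck_D1e1 ck_s0e0 ck_s0e1 ck_α]. dunf.
  split; intros [H1 H2]; topk_in H1; topk_in H2; nrm_in H1; nrm_in H2; split; topk; nrm; assumption.
Qed.

Lemma dobj_co_iff y L (d : hom X L b) (Ψ : @cell X L (ck_P p C) (ck_d1 p C ⊚ d) (ck_d0 p C ⊚ d))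
  (g : hom X y L) (h : hom X y b) (β : @cell X y (ck_P p C) (ck_d1 p C ⊚ h) (ck_d0 p C ⊚ h)) :
  dobj_of C' d Ψ g = MkDObj C' y h β <-> dobj_of C d Ψ g = MkDObj C y h β.
Proof.
  unfold dobj_of. rewrite (DObj_iff C'), (DObj_iff C).
  split; intros [E1 E2]; split; try exact E1.
  - apply (proj1 (@pkco_iff X _ _ _ _ _ _ _ _)) in E2. unfold co_cok in E2; cbn [ck_d0 ck_d1 ck_P] in E2. dunf.
    rewrite pk_cast in *. exact E2.
  - apply (proj2 (@pkco_iff X _ _ _ _ _ _ _ _)). unfold co_cok; cbn [ck_d0 ck_d1 ck_P]. dunf. rewrite pk_cast in *. exact E2.
Qed.

Lemma equiv_co {a c : ob X} (f : hom X a c) : is_equivalence f -> @is_equivalence (co X) a c f.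
Proof.
  intros [g [[θ [θ' [E1 E2]]] [κ [κ' [F1 F2]]]]]. exists g. split.
  - exists θ', θ. split; assumption.
  - exists κ', κ. split; assumption.
Qed.

End CoEff.

Lemma co_eff (X : TwoCat) {e b : ob X} (p : hom X e b) :
  is_effective_faithful p -> @is_effective_faithful (co X) e b p.
Proof.
  intros [C [L [d [Ψ [Hl [pH [E [HA Heq]]]]]]]].
  exists (co_cok C), L, d, Ψ. split.
  - intros y. destruct (Hl y) as [l1 [l2 l3]]. split; [|split].
    + intro g. unfold dobj_of at 1. apply (proj2 (@desc_co_iff X e b p C _ _ _)).
      match goal with |- is_desc C (MkDObj C y ?h ?β) =>
        assert (Eq : MkDObj C y h β = dobj_of C d Ψ g) end.
      { unfold dobj_of. apply DObj_iff. split; [reflexivity|]. unfold co_cok; cbn [ck_d0 ck_d1 ck_P]. dunf.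
        rewrite !pk_cast. reflexivity. }
      rewrite Eq. apply l1.
    + intros [h β] Hd. apply (proj1 (@desc_co_iff X e b p C y h β)) in Hd. destruct (l2 _ Hd) as [g [Hg U]].
      exists g. split.
      * apply (proj2 (@dobj_co_iff X e b p C y L d Ψ g h β)). exact Hg.
      * intros g' Hg'. apply U. apply (proj1 (@dobj_co_iff X e b p C y L d Ψ g' h β)). exact Hg'.
    + intros g g' ξ Hm. destruct (l3 g' g ξ) as [θ [Hθ U]].
      * clear l1 l2 l3. unfold DMor, dobj_of in *; cbn [dh dβ] in *. unfold co_cok in Hm.
        cbn [ck_d0 ck_d1 ck_P] in Hm. dunf. topk_in Hm. topk. nrm_in Hm. nrm. symmetry. exact Hm.
      * exists θ. split; [exact Hθ|]. intros θ' H'. apply U. exact H'.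
  - exists pH, E. split.
    + clear Hl. unfold co_cok; cbn [ck_d0 ck_d1 ck_P ck_α]. dunf. apply cast_pk. topk_in HA. pkify.
      nrm_in HA. nrm. exact HA.
    + apply equiv_co. exact Heq.
Qed.

Set Implicit Arguments.

Lemma cok_co (X : TwoCat) {e b : ob X} (p : hom X e b) :
  has_cokernel_diagram p -> @has_cokernel_diagram (co X) e b p.
Proof. intros [C]. exact (inhabits (co_cok C)). Qed.

Lemma eff_co_iff (X : TwoCat) {e b : ob X} (p : hom X e b) :
  @is_effective_faithful (co X) e b p <-> is_effective_faithful p.
Proof.
  split; intro H.
  - pose proof (co_eff H) as H'. destruct X as [D ax]. destruct D. unfold co in H'. simpl in H'.
    match type of H' with @is_effective_faithful (@MkTwoCat _ ?ax2) _ _ _ =>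
      change (@is_effective_faithful (@MkTwoCat (MkTwoCatData ob hom idm comp cell vid vcomp hcomp) ax2) e b p) in H';
      rewrite (proof_irrelevance _ ax2 ax) in H' end.
    exact H'.
  - exact (co_eff H).
Qed.

Theorem corollary5p12 (A : TwoCat) (a b : ob A) (l : hom A a b)
  (Hker : has_kernel_diagram A l) :
  (is_cokleisli A l <-> has_left_adjoint l /\ is_effective_opfaithful A l) /\
  (is_kleisli A l <-> has_right_adjoint l /\ is_effective_opfaithful A l).
Proof.
  unfold has_kernel_diagram, is_cokleisli, is_kleisli, is_effective_opfaithful in *.
  split.
  - unfold coop.
    rewrite (proof_irrelevance (TwoCatAxioms (coopData A)) (coopAx A (tc_ax A)) (coAx (opAx A (tc_ax A)))).
    change (@is_monadic (co (op A)) b a l <-> has_left_adjoint l /\ @is_effective_faithful (op A) b a l).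
    rewrite (core_monadic (B := co (op A)) (cok_co Hker)).
    rewrite eff_co_iff.
    assert (LA : @has_left_adjoint (co (op A)) b a l <-> has_left_adjoint l).
    { unfold has_left_adjoint. split; intros [f Hf]; exists f.
      - apply (proj1 (co_adj (op A) _ _ _ _)) in Hf. apply (proj1 (op_adj A _ _ _ _)) in Hf. exact Hf.
      - apply (proj2 (co_adj (op A) _ _ _ _)). apply (proj2 (op_adj A _ _ _ _)). exact Hf. }
    rewrite LA. reflexivity.
  - rewrite (core_monadic (B := op A) Hker).
    assert (RA : @has_left_adjoint (op A) b a l <-> has_right_adjoint l).
    { unfold has_left_adjoint, has_right_adjoint. split; intros [f Hf]; exists f.
      - apply (proj1 (op_adj A _ _ _ _)) in Hf. exact Hf.
      - apply (proj2 (op_adj A _ _ _ _)). exact Hf. }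
    rewrite RA. reflexivity.
Qed.
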